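(* Let $V$ be an Orlicz function and $R\in(0,\infty)$. Define $\varphi_V:(-\infty,0)\times C_b(\mathbb R)\to\mathbb R$ by $\varphi_V(\alpha,\lambda):=\log\int_{\mathbb R}e^{\alpha V(x)+\lambda(x)}dx$. Then for each $\lambda\in C_b(\mathbb R)$ there exists a unique $\alpha=\alpha(\lambda)\in(-\infty,0)$ such that $$\frac{d}{d\alpha}\varphi_V(\alpha(\lambda),\lambda)=R\quad\text{and}\quad\frac{d^2}{d\alpha^2}\varphi_V(\alpha(\lambda),\lambda)\in(0,\infty).$$ Moreover, the map $\lambda\mapsto\varphi_V(\alpha(\lambda),\lambda)$ is Fréchet-differentiable on $C_b(\mathbb R)$, and $$\varphi_V(\alpha(\lambda),\lambda)-\alpha(\lambda)R=\inf_{\alpha<0}\big[\varphi_V(\alpha,\lambda)-\alpha R\big].$$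
   Context: An Orlicz function is a convex, symmetric function $V:\mathbb R\to[0,\infty)$ with $V(0)=0$ and $V(x)>0$ for $x\ne0$. $C_b(\mathbb R)$ denotes the space of bounded continuous real functions on $\mathbb R$ with the supremum norm. *)

(* Defs.v *)
From Stdlib Require Import Reals.
From Coquelicot Require Import Coquelicot.
Open Scope R_scope.

Definition Orlicz (V : R -> R) : Prop :=
  (forall x y t, 0 <= t <= 1 -> V (t * x + (1 - t) * y) <= t * V x + (1 - t) * V y) /\
  (forall x, V (- x) = V x) /\
  V 0 = 0 /\
  (forall x, 0 <= V x) /\
  (forall x, x <> 0 -> 0 < V x).

Definition Cb (f : R -> R) : Prop :=
  (forall x, continuous f x) /\ (exists M, forall x, Rabs (f x) <= M).

Definition supnorm (f : R -> R) : R :=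
  real (Lub_Rbar (fun y => exists x, y = Rabs (f x))).

Definition phiV (V : R -> R) (alpha : R) (lam : R -> R) : R :=
  ln (RInt_gen (fun x => exp (alpha * V x + lam x))
               (Rbar_locally m_infty) (Rbar_locally p_infty)).

Definition bounded_linear_Cb (L : (R -> R) -> R) : Prop :=
  (forall f g, Cb f -> Cb g -> L (fun x => f x + g x) = L f + L g) /\
  (forall c f, Cb f -> L (fun x => c * f x) = c * L f) /\
  (exists C, forall f, Cb f -> Rabs (L f) <= C * supnorm f).

Definition Frechet_diff_Cb (F : (R -> R) -> R) (lam : R -> R) : Prop :=
  exists L, bounded_linear_Cb L /\
    forall eps, 0 < eps -> exists delta, 0 < delta /\
      forall h, Cb h -> supnorm h < delta ->
        Rabs (F (fun x => lam x + h x) - F lam - L h) <= eps * supnorm h.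

(* Main.v *)
Require Import Defs.
From Stdlib Require Import Reals Lra Psatz FunctionalExtensionality ClassicalEpsilon.
From Coquelicot Require Import Coquelicot.
Open Scope R_scope.

Lemma ball_R (x y e : R) : Rabs (y - x) < e -> ball x e y.
Proof. intros H. unfold ball; simpl; unfold AbsRing_ball, abs, minus, plus, opp; simpl. exact H. Qed.

Lemma core_int (f : R -> R) (M : R) :
  (forall x, continuous f x) -> (forall x, 0 <= f x) ->
  (forall a b, a <= b -> RInt f a b <= M) ->
  exists L, is_RInt_gen f (Rbar_locally m_infty) (Rbar_locally p_infty) L /\
    (forall a b, a <= b -> RInt f a b <= L).
Proof.
  intros Hc Hp Hb.
  assert (Hex : forall a b, ex_RInt f a b).
  { intros a b; apply (@ex_RInt_continuous R_CompleteNormedModule); intros; apply Hc. }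
  set (E := fun y => exists a b, a <= b /\ y = RInt f a b).
  destruct (completeness E) as [L [HL1 HL2]].
  { exists M. intros y [a [b [Hab ->]]]. now apply Hb. }
  { exists (RInt f 0 0). exists 0, 0. split; [lra|auto]. }
  exists L. split.
  2:{ intros a b Hab. apply HL1. exists a, b; auto. }
  intros P [eps HP].
  assert (Hlt : exists a0 b0, a0 <= b0 /\ L - eps < RInt f a0 b0).
  { destruct (Classical_Prop.classic (exists a0 b0, a0 <= b0 /\ L - eps < RInt f a0 b0)) as [H|H]; auto.
    exfalso. assert (L <= L - eps). { apply HL2. intros y [a [b [Hab ->]]].
      apply Rnot_lt_le. intros Hc'. apply H. exists a, b. split; auto. }
    destruct eps; simpl in *; lra. }
  destruct Hlt as [a0 [b0 [Hab0 Hl]]].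
  apply Filter_prod with (Q := fun a => a < a0) (R := fun b => b0 < b).
  - exists a0. auto.
  - exists b0. auto.
  - intros a b Ha Hb'. exists (RInt f a b). split.
    + apply (@RInt_correct R_CompleteNormedModule). apply Hex.
    + apply HP. apply ball_R.
      assert (H1 : RInt f a b = RInt f a a0 + RInt f a0 b0 + RInt f b0 b).
      { pose proof (@RInt_Chasles R_CompleteNormedModule f a0 b0 b (Hex _ _) (Hex _ _)) as e1.
        pose proof (@RInt_Chasles R_CompleteNormedModule f a a0 b (Hex _ _) (Hex _ _)) as e2.
        unfold plus in *; simpl in *. lra. }
      assert (0 <= RInt f a a0) by (apply RInt_ge_0; auto; lra).
      assert (0 <= RInt f b0 b) by (apply RInt_ge_0; auto; lra).
      assert (RInt f a b <= L) by (apply HL1; exists a, b; split; auto; lra).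
      simpl. apply Rabs_lt_between; lra.
Qed.

Lemma cont_mult (f g : R -> R) x : continuous f x -> continuous g x -> continuous (fun y => f y * g y) x.
Proof. intros. apply (continuous_mult (K:=R_AbsRing) f g x); auto. Qed.
Lemma cont_plus (f g : R -> R) x : continuous f x -> continuous g x -> continuous (fun y => f y + g y) x.
Proof. intros. apply (continuous_plus (V:=R_NormedModule) f g x); auto. Qed.
Lemma cont_opp (f : R -> R) x : continuous f x -> continuous (fun y => - f y) x.
Proof. intros. apply (continuous_opp (V:=R_NormedModule) f x); auto. Qed.
Lemma cont_minus (f g : R -> R) x : continuous f x -> continuous g x -> continuous (fun y => f y - g y) x.
Proof. intros. apply cont_plus; auto. apply cont_opp; auto. Qed.
Lemma cont_exp (f : R -> R) x : continuous f x -> continuous (fun y => exp (f y)) x.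
Proof. intros. apply continuous_exp_comp; auto. Qed.
Lemma cont_const (c : R) x : continuous (fun _ : R => c) x.
Proof. apply continuous_const. Qed.
Lemma cont_id x : continuous (fun y : R => y) x.
Proof. apply continuous_id. Qed.
Lemma cont_pow (f : R -> R) k x : continuous f x -> continuous (fun y => f y ^ k) x.
Proof. intros H. induction k; simpl. apply cont_const. apply cont_mult; auto. Qed.

Ltac cont := repeat first [ apply cont_mult | apply cont_plus | apply cont_minus | apply cont_opp
  | apply cont_exp | apply cont_pow | apply cont_const | apply cont_id | assumption | auto ].

Section OrliczFacts.
Variable V : R -> R.
Hypothesis hV : Orlicz V.

Lemma V_conv x y t : 0 <= t <= 1 -> V (t * x + (1 - t) * y) <= t * V x + (1 - t) * V y.
Proof. destruct hV as [h _]. apply h. Qed.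
Lemma V_sym x : V (- x) = V x.
Proof. destruct hV as [_ [h _]]. apply h. Qed.
Lemma V_0 : V 0 = 0.
Proof. destruct hV as [_ [_ [h _]]]. apply h. Qed.
Lemma V_nn x : 0 <= V x.
Proof. destruct hV as [_ [_ [_ [h _]]]]. apply h. Qed.
Lemma V_pos x : x <> 0 -> 0 < V x.
Proof. destruct hV as [_ [_ [_ [_ h]]]]. apply h. Qed.

Lemma V_abs x : V (Rabs x) = V x.
Proof. unfold Rabs. destruct (Rcase_abs x); auto. apply V_sym. Qed.

Lemma V_loc x y : Rabs (y - x) <= 1 ->
  Rabs (V y - V x) <= Rabs (y - x) * (Rabs (V (x+1) - V x) + Rabs (V (x-1) - V x)).
Proof.
  intros Hd.
  destruct (Rle_dec x y) as [Hxy|Hxy].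
  - set (t := y - x). assert (Ht : 0 <= t <= 1) by (unfold t in *; split; [lra| apply Rabs_le_between in Hd; lra]).
    assert (H1 : V y <= t * V (x+1) + (1 - t) * V x).
    { replace y with (t * (x+1) + (1-t) * x) by (unfold t; ring). apply V_conv; auto. }
    assert (H2 : V x <= / (1+t) * V y + (1 - / (1+t)) * V (x-1)).
    { replace x with (/(1+t) * y + (1 - /(1+t)) * (x - 1)) at 1.
      apply V_conv. split. left; apply Rinv_0_lt_compat; lra.
      rewrite <- Rinv_1. apply Rinv_le_contravar; lra.
      unfold t. field. lra. }
    assert (H3 : (1+t) * V x <= V y + t * V (x-1)).
    { apply Rmult_le_compat_l with (r := 1+t) in H2; [|lra].
      replace ((1+t) * (/ (1+t) * V y + (1 - / (1+t)) * V (x-1))) with (V y + t * V (x-1)) in H2 by (field; lra). lra. }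
    rewrite (Rabs_pos_eq t) by lra.
    apply Rabs_le_between. split.
    + assert (t * (V (x-1) - V x) <= t * Rabs (V (x - 1) - V x)) by (apply Rmult_le_compat_l; [lra|apply Rle_abs]).
      assert (0 <= t * Rabs (V (x + 1) - V x)) by (apply Rmult_le_pos; [lra|apply Rabs_pos]). rewrite Rmult_plus_distr_l. unfold t in *; lra.
    + assert (t * (V (x+1) - V x) <= t * Rabs (V (x + 1) - V x)) by (apply Rmult_le_compat_l; [lra|apply Rle_abs]).
      assert (0 <= t * Rabs (V (x - 1) - V x)) by (apply Rmult_le_pos; [lra|apply Rabs_pos]). rewrite Rmult_plus_distr_l. unfold t in *; lra.
  - set (t := x - y). assert (Ht : 0 <= t <= 1) by (unfold t in *; split; [lra| apply Rabs_le_between in Hd; lra]).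
    assert (H1 : V y <= t * V (x-1) + (1 - t) * V x).
    { replace y with (t * (x-1) + (1-t) * x) by (unfold t; ring). apply V_conv; auto. }
    assert (H2 : V x <= / (1+t) * V y + (1 - / (1+t)) * V (x+1)).
    { replace x with (/(1+t) * y + (1 - /(1+t)) * (x + 1)) at 1.
      apply V_conv. split. left; apply Rinv_0_lt_compat; lra.
      rewrite <- Rinv_1. apply Rinv_le_contravar; lra.
      unfold t. field. lra. }
    assert (H3 : (1+t) * V x <= V y + t * V (x+1)).
    { apply Rmult_le_compat_l with (r := 1+t) in H2; [|lra].
      replace ((1+t) * (/ (1+t) * V y + (1 - / (1+t)) * V (x+1))) with (V y + t * V (x+1)) in H2 by (field; lra). lra. }
    replace (Rabs (y - x)) with t by (unfold t; rewrite Rabs_left; lra).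
    apply Rabs_le_between. split.
    + assert (t * (V (x+1) - V x) <= t * Rabs (V (x + 1) - V x)) by (apply Rmult_le_compat_l; [lra|apply Rle_abs]).
      assert (0 <= t * Rabs (V (x - 1) - V x)) by (apply Rmult_le_pos; [lra|apply Rabs_pos]). rewrite Rmult_plus_distr_l. unfold t in *; lra.
    + assert (t * (V (x-1) - V x) <= t * Rabs (V (x - 1) - V x)) by (apply Rmult_le_compat_l; [lra|apply Rle_abs]).
      assert (0 <= t * Rabs (V (x + 1) - V x)) by (apply Rmult_le_pos; [lra|apply Rabs_pos]). rewrite Rmult_plus_distr_l. unfold t in *; lra.
Qed.

Lemma V_cont x : continuous V x.
Proof.
  apply filterlim_locally. intros eps.
  set (D := Rabs (V (x+1) - V x) + Rabs (V (x-1) - V x) + 1).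
  assert (HD : 0 < D) by (unfold D; pose proof (Rabs_pos (V (x+1) - V x)); pose proof (Rabs_pos (V (x-1) - V x)); lra).
  assert (Hd : 0 < Rmin 1 (eps / D)) by (apply Rmin_pos; [lra| apply Rdiv_lt_0_compat; [apply cond_pos|auto]]).
  exists (mkposreal _ Hd). intros y Hy.
  apply ball_R. unfold ball in Hy; simpl in Hy; unfold AbsRing_ball, abs, minus, plus, opp in Hy; simpl in Hy.
  assert (Hy0 : Rabs (y - x) < Rmin 1 (eps / D)) by exact Hy.
  assert (Hy1 : Rabs (y - x) <= 1) by (pose proof (Rmin_l 1 (eps/D)); lra).
  assert (Hy2 : Rabs (y - x) < eps / D) by (pose proof (Rmin_r 1 (eps/D)); lra).
  pose proof (V_loc x y Hy1).
  apply Rle_lt_trans with (Rabs (y - x) * D).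
  { apply Rle_trans with (1 := H). apply Rmult_le_compat_l. apply Rabs_pos. unfold D; lra. }
  apply Rmult_lt_compat_r with (r := D) in Hy2; auto.
  replace (eps / D * D) with (pos eps) in Hy2 by (field; lra). exact Hy2.
Qed.

Lemma V_lower x : V 1 * Rabs x - V 1 <= V x.
Proof.
  destruct (Rle_dec 1 (Rabs x)) as [H|H].
  - rewrite <- (V_abs x).
    assert (V 1 <= / Rabs x * V (Rabs x) + (1 - / Rabs x) * V 0).
    { replace 1 with (/ Rabs x * Rabs x + (1 - / Rabs x) * 0) at 1 by (field; lra).
      apply V_conv. split. left; apply Rinv_0_lt_compat; lra.
      rewrite <- Rinv_1. apply Rinv_le_contravar; lra. }
    rewrite V_0 in H0. rewrite Rmult_0_r, Rplus_0_r in H0.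
    apply Rmult_le_compat_l with (r := Rabs x) in H0; [|lra].
    replace (Rabs x * (/ Rabs x * V (Rabs x))) with (V (Rabs x)) in H0 by (field; lra).
    pose proof (V_nn 1). nra.
  - pose proof (V_nn x). pose proof (V_nn 1). nra.
Qed.

Lemma V_upper_small x : Rabs x <= 1 -> V x <= V 1 * Rabs x.
Proof.
  intros H. rewrite <- V_abs.
  replace (Rabs x) with (Rabs x * 1 + (1 - Rabs x) * 0) at 1 by ring.
  eapply Rle_trans. apply V_conv. pose proof (Rabs_pos x); lra.
  rewrite V_0. lra.
Qed.

Lemma V_upper_int n x : Rabs x <= n -> V x <= V n.
Proof.
  intros H. rewrite <- V_abs.
  destruct (Req_dec n 0) as [Hn|Hn].
  { subst. assert (Rabs x = 0) by (pose proof (Rabs_pos x); lra). rewrite H0. lra. }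
  assert (0 < n) by (pose proof (Rabs_pos x); lra).
  replace (Rabs x) with ((Rabs x / n) * n + (1 - Rabs x / n) * 0) by (field; lra).
  eapply Rle_trans. apply V_conv. split. apply Rdiv_le_0_compat; auto. apply Rabs_pos.
  apply Rmult_le_reg_r with n; auto. unfold Rdiv. rewrite Rmult_assoc, Rinv_l; lra.
  rewrite V_0. assert (0 <= Rabs x / n <= 1).
  { split. apply Rdiv_le_0_compat; auto. apply Rabs_pos.
    apply Rmult_le_reg_r with n; auto. unfold Rdiv. rewrite Rmult_assoc, Rinv_l; lra. }
  pose proof (V_nn n). nra.
Qed.

End OrliczFacts.

Notation IG f := (@RInt_gen R_CompleteNormedModule f (Rbar_locally m_infty) (Rbar_locally p_infty)).
Definition Dom (f : R -> R) := (forall x, continuous f x) /\ exists K, forall x, Rabs (f x) <= K / (1 + x^2).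

Lemma pos1x2 x : 0 < 1 + x^2.
Proof. nra. Qed.

Lemma cont_inv (f : R -> R) x : continuous f x -> f x <> 0 -> continuous (fun y => / f y) x.
Proof.
  intros Hc Hn. apply (continuous_comp f Rinv); auto.
  apply continuity_pt_filterlim. apply (continuity_pt_inv (fun y => y)). apply continuity_pt_id. auto.
Qed.

Lemma isIG_ext f g l : (forall x, f x = g x) -> @is_RInt_gen R_NormedModule f (Rbar_locally m_infty) (Rbar_locally p_infty) l -> @is_RInt_gen R_NormedModule g (Rbar_locally m_infty) (Rbar_locally p_infty) l.
Proof. intros H. replace g with f; auto. apply functional_extensionality; auto. Qed.

Lemma RInt_atan K a b : 0 <= K -> a <= b -> RInt (fun x => K / (1 + x^2)) a b <= K * PI.
Proof.
  intros HK Hab.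
  assert (H : is_RInt (fun x => K / (1 + x^2)) a b (K * atan b - K * atan a)).
  { apply (@is_RInt_derive R_CompleteNormedModule (fun x => K * atan x)).
    - intros x _. replace (K / (1 + x^2)) with (K * / (1 + x²)).
      apply (is_derive_scal (fun x => atan x)). apply is_derive_atan.
      unfold Rsqr. unfold Rdiv. f_equal. f_equal. ring.
    - intros x _. apply cont_mult. apply cont_const. apply cont_inv. cont. pose proof (pos1x2 x). lra. }
  rewrite (is_RInt_unique _ _ _ _ H).
  pose proof (atan_bound a). pose proof (atan_bound b). nra.
Qed.

Lemma ex_RInt_c (f : R -> R) a b : (forall x, continuous f x) -> ex_RInt f a b.
Proof. intros Hc. apply (@ex_RInt_continuous R_CompleteNormedModule). intros; apply Hc. Qed.

Lemma Dom_K f : Dom f -> exists K, 0 <= K /\ forall x, Rabs (f x) <= K / (1 + x^2).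
Proof.
  intros [_ [K HK]]. exists K. split; auto.
  pose proof (HK 0). pose proof (Rabs_pos (f 0)). replace (1 + 0^2) with 1 in H by ring. lra.
Qed.

Lemma cont_K K x : continuous (fun x => K / (1 + x^2)) x.
Proof.
  apply cont_mult. apply cont_const. apply cont_inv. cont. pose proof (pos1x2 x). lra.
Qed.

Lemma Dom_nn_core f : Dom f -> (forall x, 0 <= f x) ->
  is_RInt_gen f (Rbar_locally m_infty) (Rbar_locally p_infty) (IG f) /\ (forall a b, a <= b -> RInt f a b <= IG f).
Proof.
  intros Hd Hp. destruct (Dom_K f Hd) as [K [HK HKb]].
  destruct (core_int f (K * PI)) as [L [HL1 HL2]]; auto. apply Hd.
  { intros a b Hab. eapply Rle_trans; [|apply (RInt_atan K a b HK Hab)].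
    apply RInt_le; auto. apply ex_RInt_c, Hd. apply ex_RInt_c, cont_K.
    intros x _. eapply Rle_trans; [apply Rle_abs|apply HKb]. }
  rewrite (is_RInt_gen_unique _ _ HL1). auto.
Qed.

Lemma Dom_int f : Dom f -> is_RInt_gen f (Rbar_locally m_infty) (Rbar_locally p_infty) (IG f).
Proof.
  intros Hd. destruct (Dom_K f Hd) as [K [HK HKb]].
  set (g := fun x => K / (1 + x^2)).
  assert (Hg : Dom g). { split. intros; apply cont_K. exists K. intros x. unfold g.
    rewrite Rabs_right. lra. apply Rle_ge. apply Rdiv_le_0_compat; auto. apply pos1x2. }
  assert (Hfg : Dom (fun x => f x + g x)).
  { split. intros; apply cont_plus. apply Hd. apply Hg. exists (2*K). intros x.
    eapply Rle_trans. apply Rabs_triang. pose proof (HKb x). pose proof (pos1x2 x).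
    unfold g. rewrite (Rabs_right (K / (1 + x^2))). unfold Rdiv in *. lra. apply Rle_ge. apply Rdiv_le_0_compat; auto. }
  assert (P1 : forall x, 0 <= f x + g x).
  { intros x. pose proof (HKb x) as H. apply Rabs_le_between in H. unfold g. lra. }
  assert (P2 : forall x, 0 <= g x).
  { intros x. unfold g. apply Rdiv_le_0_compat; auto. apply pos1x2. }
  destruct (Dom_nn_core _ Hfg P1) as [H1 _].
  destruct (Dom_nn_core _ Hg P2) as [H2 _].
  pose proof (is_RInt_gen_minus _ _ _ _ H1 H2) as H3.
  apply (isIG_ext _ f) in H3. 2:{ intros y. unfold minus, plus, opp; simpl. ring. }
  rewrite (is_RInt_gen_unique _ _ H3). exact H3.
Qed.

Lemma IG_unique f l : @is_RInt_gen R_NormedModule f (Rbar_locally m_infty) (Rbar_locally p_infty) l -> IG f = l.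
Proof. intros H. apply (@is_RInt_gen_unique R_CompleteNormedModule _ _ _ _ _ _ H). Qed.

Lemma Dom_plus f g : Dom f -> Dom g -> Dom (fun x => f x + g x).
Proof.
  intros [Hf [K1 H1]] [Hg [K2 H2]]. split. intros; apply cont_plus; auto.
  exists (K1 + K2). intros x. eapply Rle_trans. apply Rabs_triang.
  pose proof (H1 x); pose proof (H2 x). unfold Rdiv in *. lra.
Qed.

Lemma Dom_scal c f : Dom f -> Dom (fun x => c * f x).
Proof.
  intros [Hf [K1 H1]]. split. intros; apply cont_mult; auto. apply cont_const.
  exists (Rabs c * K1). intros x. rewrite Rabs_mult.
  unfold Rdiv. rewrite Rmult_assoc. apply Rmult_le_compat_l. apply Rabs_pos. apply H1.
Qed.

Lemma Dom_minus f g : Dom f -> Dom g -> Dom (fun x => f x - g x).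
Proof.
  intros Hf Hg. pose proof (Dom_plus _ _ Hf (Dom_scal (-1) _ Hg)).
  replace (fun x => f x - g x) with (fun x => f x + -1 * g x). auto.
  apply functional_extensionality; intros; ring.
Qed.

Lemma Dom_le f g : (forall x, continuous f x) -> Dom g -> (forall x, Rabs (f x) <= Rabs (g x)) -> Dom f.
Proof.
  intros Hf [Hg [K HK]] Hle. split; auto. exists K. intros x. eapply Rle_trans; eauto.
Qed.

Lemma IG_plus f g : Dom f -> Dom g -> IG (fun x => f x + g x) = IG f + IG g.
Proof.
  intros Hf Hg. apply IG_unique.
  apply (is_RInt_gen_plus f g _ _ (Dom_int _ Hf) (Dom_int _ Hg)).
Qed.

Lemma IG_scal c f : Dom f -> IG (fun x => c * f x) = c * IG f.
Proof.
  intros Hf. apply IG_unique.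
  apply (is_RInt_gen_scal f c _ (Dom_int _ Hf)).
Qed.

Lemma IG_minus f g : Dom f -> Dom g -> IG (fun x => f x - g x) = IG f - IG g.
Proof.
  intros Hf Hg. apply IG_unique.
  apply (is_RInt_gen_minus f g _ _ (Dom_int _ Hf) (Dom_int _ Hg)).
Qed.

Lemma IG_nn f : Dom f -> (forall x, 0 <= f x) -> 0 <= IG f.
Proof.
  intros Hf Hp. destruct (Dom_nn_core f Hf Hp) as [_ H]. eapply Rle_trans; [|apply (H 0 0)]; [|lra].
  rewrite RInt_point. unfold zero; simpl; lra.
Qed.

Lemma IG_RInt f a b : Dom f -> (forall x, 0 <= f x) -> a <= b -> RInt f a b <= IG f.
Proof. intros Hf Hp Hab. destruct (Dom_nn_core f Hf Hp) as [_ H]. auto. Qed.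

Lemma IG_le f g : Dom f -> Dom g -> (forall x, f x <= g x) -> IG f <= IG g.
Proof.
  intros Hf Hg Hle. pose proof (IG_nn (fun x => g x - f x) (Dom_minus _ _ Hg Hf)).
  rewrite IG_minus in H; auto. assert (0 <= IG g - IG f). apply H. intros x; specialize (Hle x); lra. lra.
Qed.

Lemma IG_ext (f g : R -> R) : (forall x, f x = g x) -> IG f = IG g.
Proof. intros H. replace g with f; auto. apply functional_extensionality; auto. Qed.

Lemma RInt_lb_const f a b c : a <= b -> (forall x, continuous f x) -> (forall x, a <= x <= b -> c <= f x) -> c * (b - a) <= RInt f a b.
Proof.
  intros Hab Hc Hl. replace (c * (b - a)) with (RInt (fun _ => c) a b).
  apply RInt_le; auto. apply ex_RInt_c; intros; apply cont_const. apply ex_RInt_c; auto.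
  intros x Hx. apply Hl. lra.
  rewrite RInt_const. unfold scal; simpl; unfold mult; simpl. ring.
Qed.

Lemma exp_pow_n x n : exp x ^ n = exp (INR n * x).
Proof.
  induction n. simpl. rewrite Rmult_0_l, exp_0. auto.
  rewrite S_INR. simpl pow. rewrite IHn. rewrite <- exp_plus. f_equal. ring.
Qed.

Lemma exp_mono x y : x <= y -> exp x <= exp y.
Proof. intros H. destruct (Req_dec x y) as [E|E]. rewrite E; lra. left. apply exp_increasing. lra. Qed.

Lemma pow_le_exp k y : 0 <= y -> y ^ k <= (INR k + 1) ^ k * exp y.
Proof.
  intros Hy. pose proof (pos_INR k) as Hk.
  set (z := y / (INR k + 1)).
  assert (Hz : 0 <= z) by (unfold z; apply Rdiv_le_0_compat; lra).
  assert (H1 : z <= exp z) by (pose proof (exp_ineq1_le z); lra).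
  assert (H2 : z ^ k <= exp z ^ k) by (apply pow_incr; lra).
  rewrite exp_pow_n in H2.
  assert (H3 : exp (INR k * z) <= exp y).
  { apply exp_mono.
    unfold z. apply Rmult_le_reg_r with (INR k + 1). lra. unfold Rdiv.
    replace (INR k * (y * / (INR k + 1)) * (INR k + 1)) with (INR k * y) by (field; lra). nra. }
  replace y with ((INR k + 1) * z) at 1 by (unfold z; field; lra).
  rewrite Rpow_mult_distr. apply Rmult_le_compat_l. apply pow_le; lra. lra.
Qed.

Section Dom.
Variable V : R -> R.
Hypothesis hV : Orlicz V.

Lemma dom_core a k : a < 0 -> exists K, forall x, V x ^ k * exp (a * V x) <= K / (1 + x^2).
Proof.
  intros Ha. set (t := - a / 2). assert (Ht : 0 < t) by (unfold t; lra).
  set (c := V 1). assert (Hc : 0 < c) by (apply (V_pos V hV); lra).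
  set (u := t * c). assert (Hu : 0 < u) by (unfold u; nra).
  set (Ck := (INR k + 1) ^ k / t ^ k).
  exists (Ck * exp (t * c) * (1 + 9 / u^2)).
  intros x. pose proof (pos1x2 x).
  assert (HA : V x ^ k * exp (- t * V x) <= Ck).
  { pose proof (pow_le_exp k (t * V x)). pose proof (V_nn V hV x).
    assert (0 <= t * V x) by nra. specialize (H0 H2).
    rewrite Rpow_mult_distr in H0. unfold Ck.
    assert (0 < t ^ k) by (apply pow_lt; auto).
    apply Rmult_le_reg_l with (t ^ k); auto.
    replace (t ^ k * ((INR k + 1) ^ k / t ^ k)) with ((INR k + 1) ^ k) by (field; lra).
    apply Rmult_le_reg_r with (exp (t * V x)). apply exp_pos.
    replace (t ^ k * (V x ^ k * exp (- t * V x)) * exp (t * V x)) with (t ^ k * V x ^ k).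
    lra. rewrite !Rmult_assoc, <- exp_plus.
    replace (- t * V x + t * V x) with 0 by ring. rewrite exp_0. ring. }
  assert (HCk : 0 <= Ck). { pose proof (pow_le_exp k 0). eapply Rle_trans; [|apply HA].
    apply Rmult_le_pos. apply pow_le. apply V_nn; auto. left; apply exp_pos. }
  assert (HB : exp (- t * V x) <= exp (t * c) * exp (- u * Rabs x)).
  { rewrite <- exp_plus. apply exp_mono. pose proof (V_lower V hV x). fold c in H0. unfold u.
    assert (t * (c * Rabs x - c) <= t * V x) by (apply Rmult_le_compat_l; lra). nra. }
  assert (HC : (1 + x^2) * exp (- u * Rabs x) <= 1 + 9 / u^2).
  { pose proof (pow_le_exp 2 (u * Rabs x)). assert (0 <= u * Rabs x) by (pose proof (Rabs_pos x); nra).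
    specialize (H0 H1). replace ((INR 2 + 1)^2) with 9 in H0 by (simpl; ring).
    assert (E1 : exp (- u * Rabs x) * exp (u * Rabs x) = 1).
    { rewrite <- exp_plus. replace (- u * Rabs x + u * Rabs x) with 0 by ring. apply exp_0. }
    assert (E2 : exp (- u * Rabs x) <= 1).
    { rewrite <- exp_0. apply exp_mono. lra. }
    assert (E3 : x ^ 2 = Rabs x ^ 2) by (rewrite <- Rsqr_pow2, <- Rsqr_pow2; apply Rsqr_abs).
    assert (E4 : x^2 * exp (- u * Rabs x) <= 9 / u^2).
    { rewrite E3. assert (0 < u^2) by (apply pow_lt; auto).
      apply Rmult_le_reg_l with (u^2); auto. replace (u ^ 2 * (9 / u ^ 2)) with 9 by (field; lra).
      rewrite Rpow_mult_distr in H0.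
      pose proof (exp_pos (- u * Rabs x)).
      apply Rmult_le_compat_r with (r := exp (- u * Rabs x)) in H0; [|lra].
      replace (u ^ 2 * Rabs x ^ 2 * exp (- u * Rabs x)) with (u ^ 2 * (Rabs x ^ 2 * exp (- u * Rabs x))) in H0 by ring.
      replace (9 * exp (u * Rabs x) * exp (- u * Rabs x)) with 9 in H0 by (rewrite Rmult_assoc, (Rmult_comm (exp _)), E1; ring).
      lra. }
    lra. }
  replace (a * V x) with (- t * V x + - t * V x) by (unfold t; field). rewrite exp_plus.
  apply Rmult_le_reg_l with (1 + x^2); auto.
  replace ((1 + x ^ 2) * (Ck * exp (t * c) * (1 + 9 / u ^ 2) / (1 + x ^ 2))) with (Ck * exp (t * c) * (1 + 9 / u ^ 2)) by (field; lra).
  pose proof (exp_pos (- t * V x)). pose proof (exp_pos (t * c)). pose proof (exp_pos (- u * Rabs x)).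
  assert (0 <= V x ^ k) by (apply pow_le; apply V_nn; auto).
  apply Rle_trans with ((1 + x^2) * (Ck * (exp (t * c) * exp (- u * Rabs x)))).
  { replace (V x ^ k * (exp (- t * V x) * exp (- t * V x))) with ((V x ^ k * exp (- t * V x)) * exp (- t * V x)) by ring.
    apply Rmult_le_compat_l. lra. apply Rmult_le_compat; try lra. nra. }
  replace ((1 + x ^ 2) * (Ck * (exp (t * c) * exp (- u * Rabs x)))) with (Ck * exp (t * c) * ((1 + x ^ 2) * exp (- u * Rabs x))) by ring.
  apply Rmult_le_compat_l. nra. exact HC.
Qed.

Definition bnd (f : R -> R) B := forall x, Rabs (f x) <= B.
Definition ctn (f : R -> R) := forall x, continuous f x.

Lemma Dom_ig k a lam u B U : a < 0 -> ctn lam -> bnd lam B -> ctn u -> bnd u U ->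
  Dom (fun x => V x ^ k * u x * exp (a * V x + lam x)).
Proof.
  intros Ha Hlc Hlb Huc Hub. destruct (dom_core a k Ha) as [K HK].
  split. intros x. cont; first [apply V_cont; auto | apply Huc | apply Hlc].
  exists (U * exp B * K). intros x.
  pose proof (Hub x). pose proof (Hlb x). pose proof (HK x).
  assert (0 <= Rabs (u x)) by apply Rabs_pos.
  rewrite Rabs_mult, Rabs_mult. rewrite (Rabs_right (exp _)) by (left; apply exp_pos).
  rewrite exp_plus. rewrite <- RPow_abs. rewrite (Rabs_right (V x)) by (apply Rle_ge, V_nn; auto).
  assert (exp (lam x) <= exp B).
  { apply exp_mono. apply Rabs_le_between in H0. lra. }
  pose proof (exp_pos (lam x)). pose proof (exp_pos (a * V x)).
  assert (0 <= V x ^ k) by (apply pow_le; apply V_nn; auto).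
  replace (V x ^ k * Rabs (u x) * (exp (a * V x) * exp (lam x))) with (Rabs (u x) * exp (lam x) * (V x ^ k * exp (a * V x))) by ring.
  replace (U * exp B * K / (1 + x ^ 2)) with ((U * exp B) * (K / (1 + x^2))) by (unfold Rdiv; ring).
  apply Rmult_le_compat; [nra|nra| |lra]. apply Rmult_le_compat; lra.
Qed.

End Dom.

Lemma exp_rem u : 0 <= exp u - 1 - u <= u^2 * exp (Rabs u).
Proof.
  pose proof (exp_ineq1_le u) as H1. pose proof (exp_ineq1_le (-u)) as H2.
  assert (E : exp u * exp (-u) = 1) by (rewrite <- exp_plus; replace (u + - u) with 0 by ring; apply exp_0).
  pose proof (exp_pos u). pose proof (exp_pos (-u)).
  assert (H3 : exp u * (1 - u) <= 1) by nra.
  split. lra.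
  destruct (Rle_dec 0 u).
  - rewrite Rabs_right by lra. nra.
  - rewrite Rabs_left by lra. pose proof (exp_pos (-u)).
    assert (1 <= exp (-u)) by (rewrite <- exp_0; apply exp_mono; lra). nra.
Qed.

Lemma d_ext (f : R -> R) x l l' : is_derive f x l -> l = l' -> is_derive f x l'.
Proof. intros H ->; auto. Qed.
Lemma d_mult (f g : R -> R) x df dg : is_derive f x df -> is_derive g x dg -> is_derive (fun y => f y * g y) x (df * g x + f x * dg).
Proof. intros. apply (is_derive_mult f g x df dg); auto. intros; apply Rmult_comm. Qed.
Lemma d_plus (f g : R -> R) x df dg : is_derive f x df -> is_derive g x dg -> is_derive (fun y => f y + g y) x (df + dg).
Proof. intros. apply (is_derive_plus f g x df dg); auto. Qed.
Lemma d_minus (f g : R -> R) x df dg : is_derive f x df -> is_derive g x dg -> is_derive (fun y => f y - g y) x (df - dg).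
Proof. intros. apply (is_derive_minus f g x df dg); auto. Qed.
Lemma d_div (f g : R -> R) x df dg : is_derive f x df -> is_derive g x dg -> g x <> 0 -> is_derive (fun y => f y / g y) x ((df * g x - f x * dg) / g x ^ 2).
Proof. intros. apply is_derive_div; auto. Qed.
Lemma d_ln (f : R -> R) x df : is_derive f x df -> 0 < f x -> is_derive (fun y => ln (f y)) x (df / f x).
Proof.
  intros H Hp. eapply d_ext. apply (is_derive_comp ln f x). apply is_derive_ln; auto. exact H.
  unfold scal; simpl; unfold mult; simpl. unfold Rdiv. ring.
Qed.

Lemma Dom_ext f g : Dom f -> (forall x, f x = g x) -> Dom g.
Proof. intros H E. replace g with f; auto. apply functional_extensionality; auto. Qed.

Lemma IG_pos f x0 : Dom f -> (forall x, 0 <= f x) -> 0 < f x0 -> 0 < IG f.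
Proof.
  intros Hd Hp Hx. destruct Hd as [Hc HK].
  pose proof (proj1 (filterlim_locally (F := locally x0) f (f x0)) (Hc x0)) as C.
  assert (He : 0 < f x0 / 2) by lra. destruct (C (mkposreal _ He)) as [d Hd].
  apply Rlt_le_trans with ((f x0 / 2) * ((x0 + d/2) - (x0 - d/2))).
  { pose proof (cond_pos d). apply Rmult_lt_0_compat; lra. }
  eapply Rle_trans. apply RInt_lb_const. pose proof (cond_pos d); lra. auto.
  { intros x Hx'. assert (ball x0 d x).
    { apply ball_R. apply Rabs_le_between' || idtac. pose proof (cond_pos d). apply Rabs_lt_between. lra. }
    specialize (Hd x H). unfold ball in Hd; simpl in Hd; unfold AbsRing_ball, abs, minus, plus, opp in Hd; simpl in Hd.
    apply Rabs_lt_between in Hd. simpl in Hd. lra. }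
  apply IG_RInt; auto. split; auto. pose proof (cond_pos d); lra.
Qed.

Section Moments.
Variable V : R -> R.
Hypothesis hV : Orlicz V.

Definition Fk k a (lam : R -> R) := fun x => V x ^ k * exp (a * V x + lam x).
Definition M k a lam : R := IG (Fk k a lam).

Lemma Cb_ctn lam : Cb lam -> ctn lam.
Proof. intros [H _]; exact H. Qed.

Lemma Dom_F k a lam : Cb lam -> a < 0 -> Dom (Fk k a lam).
Proof.
  intros [Hc [B HB]] Ha. eapply Dom_ext. apply (Dom_ig V hV k a lam (fun _ => 1) B 1); auto.
  intros x; apply cont_const. intros x; rewrite Rabs_R1; lra.
  intros x; unfold Fk; ring.
Qed.

Lemma F_nn k a lam x : 0 <= Fk k a lam x.
Proof. unfold Fk. apply Rmult_le_pos. apply pow_le, (V_nn V hV). left; apply exp_pos. Qed.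

Lemma M_nn k a lam : Cb lam -> a < 0 -> 0 <= M k a lam.
Proof. intros. apply IG_nn. apply Dom_F; auto. apply F_nn. Qed.

Lemma M0_pos a lam : Cb lam -> a < 0 -> 0 < M 0 a lam.
Proof. intros. apply (IG_pos _ 0). apply Dom_F; auto. apply F_nn. unfold Fk. simpl. rewrite Rmult_1_l. apply exp_pos. Qed.

Lemma M1_pos a lam : Cb lam -> a < 0 -> 0 < M 1 a lam.
Proof.
  intros. apply (IG_pos _ 1). apply Dom_F; auto. apply F_nn. unfold Fk. simpl. rewrite Rmult_1_r.
  apply Rmult_lt_0_compat. apply (V_pos V hV); lra. apply exp_pos.
Qed.

Lemma M_mono k a b lam : Cb lam -> a < 0 -> b < 0 -> a <= b -> M k a lam <= M k b lam.
Proof.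
  intros. apply IG_le; try apply Dom_F; auto. intros x. unfold Fk.
  apply Rmult_le_compat_l. apply pow_le, (V_nn V hV). apply exp_mono.
  pose proof (V_nn V hV x). nra.
Qed.

Lemma M_rem k a h lam : Cb lam -> a < 0 -> Rabs h <= - a / 2 ->
  0 <= M k (a + h) lam - M k a lam - h * M (S k) a lam <= h^2 * M (S (S k)) (a/2) lam.
Proof.
  intros Hl Ha Hh.
  assert (Hah : a + h < 0) by (apply Rabs_le_between in Hh; lra).
  assert (E : M k (a + h) lam - M k a lam - h * M (S k) a lam =
              IG (fun x => Fk k (a+h) lam x - Fk k a lam x - h * Fk (S k) a lam x)).
  { unfold M. rewrite IG_minus, IG_minus, IG_scal; auto; try apply Dom_F; auto.
    apply Dom_minus; apply Dom_F; auto. apply Dom_scal; apply Dom_F; auto. }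
  assert (Hd : Dom (fun x => Fk k (a+h) lam x - Fk k a lam x - h * Fk (S k) a lam x)).
  { apply Dom_minus. apply Dom_minus; apply Dom_F; auto. apply Dom_scal; apply Dom_F; auto. }
  assert (Hpt : forall x, Fk k (a+h) lam x - Fk k a lam x - h * Fk (S k) a lam x =
       V x ^ k * (exp (h * V x) - 1 - h * V x) * exp (a * V x + lam x)).
  { intros x. unfold Fk. replace ((a + h) * V x + lam x) with (h * V x + (a * V x + lam x)) by ring.
    rewrite exp_plus. simpl. ring. }
  rewrite E. split.
  - apply IG_nn; auto. intros x. rewrite Hpt. apply Rmult_le_pos. apply Rmult_le_pos.
    apply pow_le, (V_nn V hV). apply exp_rem. left; apply exp_pos.
  - unfold M. rewrite <- IG_scal by (apply Dom_F; auto; lra).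
    apply IG_le; auto. apply Dom_scal, Dom_F; auto; lra.
    intros x. rewrite Hpt. unfold Fk.
    pose proof (exp_rem (h * V x)) as [R1 R2].
    pose proof (V_nn V hV x).
    rewrite Rabs_mult, (Rabs_right (V x)) in R2 by lra.
    assert (exp (Rabs h * V x) * exp (a * V x + lam x) <= exp (a / 2 * V x + lam x)).
    { rewrite <- exp_plus. apply exp_mono. nra. }
    assert (0 <= V x ^ k) by (apply pow_le; auto).
    pose proof (exp_pos (a * V x + lam x)). pose proof (exp_pos (Rabs h * V x)).
    replace (h ^ 2 * (V x ^ S (S k) * exp (a / 2 * V x + lam x))) with (V x ^ k * (h * V x)^2 * exp (a / 2 * V x + lam x)) by (simpl; ring).
    assert (0 <= V x ^ k * (h * V x) ^ 2) by (apply Rmult_le_pos; auto; apply pow2_ge_0).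
    apply Rle_trans with (V x ^ k * ((h * V x) ^ 2 * exp (Rabs h * V x)) * exp (a * V x + lam x)).
    { apply Rmult_le_compat_r. lra. apply Rmult_le_compat_l; auto. }
    replace (V x ^ k * ((h * V x) ^ 2 * exp (Rabs h * V x)) * exp (a * V x + lam x)) with
      (V x ^ k * (h * V x) ^ 2 * (exp (Rabs h * V x) * exp (a * V x + lam x))) by ring.
    apply Rmult_le_compat_l; auto.
Qed.

Lemma M_deriv k a lam : Cb lam -> a < 0 -> is_derive (fun b => M k b lam) a (M (S k) a lam).
Proof.
  intros Hl Ha. apply is_derive_Reals. intros eps Heps.
  set (C := M (S (S k)) (a/2) lam). assert (HC : 0 <= C) by (apply M_nn; auto; lra).
  assert (Hd : 0 < Rmin (- a / 2) (eps / (C + 1))) by (apply Rmin_pos; [lra| apply Rdiv_lt_0_compat; lra]).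
  exists (mkposreal _ Hd). intros h Hh0 Hh. simpl in Hh.
  assert (H1 : Rabs h <= - a / 2) by (pose proof (Rmin_l (- a / 2) (eps / (C + 1))); lra).
  assert (H2 : Rabs h < eps / (C + 1)) by (pose proof (Rmin_r (- a / 2) (eps / (C + 1))); lra).
  destruct (M_rem k a h lam Hl Ha H1) as [R1 R2]. fold C in R2.
  assert (Hhp : 0 < Rabs h) by (apply Rabs_pos_lt; auto).
  replace ((M k (a + h) lam - M k a lam) / h - M (S k) a lam) with ((M k (a + h) lam - M k a lam - h * M (S k) a lam) / h) by (field; auto).
  unfold Rdiv. rewrite Rabs_mult, Rabs_inv. rewrite Rabs_right by lra.
  apply Rmult_lt_reg_r with (Rabs h); auto. rewrite Rmult_assoc, Rinv_l by lra.
  assert (h^2 = Rabs h * Rabs h) by (rewrite <- Rabs_mult; simpl; rewrite Rmult_1_r, Rabs_right; [auto|apply Rle_ge; nra]).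
  assert (Rabs h * (C + 1) < eps) by (apply Rmult_lt_reg_r with (/ (C+1)); [apply Rinv_0_lt_compat; lra|]; rewrite Rmult_assoc, Rinv_r by lra; unfold Rdiv in H2; lra).
  nra.
Qed.

End Moments.

Section G.
Variable V : R -> R.
Hypothesis hV : Orlicz V.

Definition p k a lam := M V k a lam / M V 0 a lam.
Definition g a lam := p 1 a lam.
Definition v a lam := p 2 a lam - (p 1 a lam)^2.

Lemma p_deriv k a lam : Cb lam -> a < 0 -> is_derive (fun b => p k b lam) a (p (S k) a lam - p k a lam * p 1 a lam).
Proof.
  intros Hl Ha. pose proof (M0_pos V hV a lam Hl Ha).
  eapply d_ext. unfold p. apply d_div. apply M_deriv; auto. apply M_deriv; auto. lra. cbv beta. unfold p. match goal with |- ?A = ?B => change (@eq R A B) end. field. lra.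

Qed.

Lemma p_nn k a lam : Cb lam -> a < 0 -> 0 <= p k a lam.
Proof. intros. unfold p. apply Rdiv_le_0_compat. apply M_nn; auto. apply M0_pos; auto. Qed.

Lemma g_pos a lam : Cb lam -> a < 0 -> 0 < g a lam.
Proof. intros. unfold g, p. apply Rdiv_lt_0_compat. apply M1_pos; auto. apply M0_pos; auto. Qed.

Lemma g_deriv a lam : Cb lam -> a < 0 -> is_derive (fun b => g b lam) a (v a lam).
Proof. intros. eapply d_ext. apply (p_deriv 1); auto. unfold v. simpl. ring. Qed.

Lemma v_pos a lam : Cb lam -> a < 0 -> 0 < v a lam.
Proof.
  intros Hl Ha. pose proof (M0_pos V hV a lam Hl Ha) as H0.
  set (m := g a lam). assert (Hm : 0 < m) by (apply g_pos; auto).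
  assert (E : IG (fun x => (V x - m)^2 * exp (a * V x + lam x)) = M V 2 a lam - 2 * m * M V 1 a lam + m^2 * M V 0 a lam).
  { unfold M. rewrite <- IG_scal, <- IG_scal, <- IG_minus, <- IG_plus; try (apply Dom_F; auto);
      try (apply Dom_scal; apply Dom_F; auto); try (apply Dom_minus; [apply Dom_F; auto|apply Dom_scal; apply Dom_F; auto]).
    apply IG_ext. intros x. unfold Fk. simpl. ring. }
  assert (P : 0 < IG (fun x => (V x - m)^2 * exp (a * V x + lam x))).
  { apply (IG_pos _ 0).
    - eapply Dom_ext. apply (Dom_plus _ _ (Dom_minus _ _ (Dom_F V hV 2 a lam Hl Ha) (Dom_scal (2*m) _ (Dom_F V hV 1 a lam Hl Ha))) (Dom_scal (m^2) _ (Dom_F V hV 0 a lam Hl Ha))).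
      intros x. unfold Fk. simpl. ring.
    - intros x. apply Rmult_le_pos. apply pow2_ge_0. left; apply exp_pos.
    - rewrite (V_0 V hV). apply Rmult_lt_0_compat. replace (0 - m) with (-m) by ring. nra. apply exp_pos. }
  rewrite E in P. unfold v, p. fold m. unfold m, g, p in *.
  replace (M V 2 a lam / M V 0 a lam - (M V 1 a lam / M V 0 a lam) ^ 2) with
    ((M V 2 a lam - 2 * (M V 1 a lam / M V 0 a lam) * M V 1 a lam + (M V 1 a lam / M V 0 a lam) ^ 2 * M V 0 a lam) / M V 0 a lam) by (field; lra).
  apply Rdiv_lt_0_compat; auto.
Qed.

Lemma g_strict a b lam : Cb lam -> a < b -> b < 0 -> g a lam < g b lam.
Proof.
  intros Hl Hab Hb.
  destruct (MVT_cor2 (fun x => g x lam) (fun x => v x lam) a b Hab) as [c [Ec Hc]].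
  { intros c Hc. apply is_derive_Reals. apply g_deriv; auto. lra. }
  pose proof (v_pos c lam Hl ltac:(lra)). nra.
Qed.

Lemma g_mono a b lam : Cb lam -> a <= b -> b < 0 -> g a lam <= g b lam.
Proof. intros Hl Hab Hb. destruct (Req_dec a b). subst; lra. left; apply g_strict; auto; lra. Qed.

Lemma phiV_M a lam : phiV V a lam = ln (M V 0 a lam).
Proof. unfold phiV, M, Fk. f_equal. apply IG_ext. intros x; simpl; ring. Qed.

Lemma phi_deriv a lam : Cb lam -> a < 0 -> is_derive (fun b => phiV V b lam) a (g a lam).
Proof.
  intros Hl Ha. eapply is_derive_ext.
  intros t. symmetry. apply phiV_M.
  eapply d_ext. apply d_ln. apply M_deriv; auto. apply M0_pos; auto. unfold g, p. auto.
Qed.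

Lemma loc_neg a (P : R -> Prop) : a < 0 -> (forall t, t < 0 -> P t) -> locally a P.
Proof.
  intros Ha H. assert (Hp : 0 < - a / 2) by lra. exists (mkposreal _ Hp). intros y Hy.
  apply H. unfold ball in Hy; simpl in Hy; unfold AbsRing_ball, abs, minus, plus, opp in Hy; simpl in Hy.
  apply Rabs_lt_between in Hy. lra.
Qed.

Lemma Dphi_eq a lam : Cb lam -> a < 0 -> Derive (fun b => phiV V b lam) a = g a lam.
Proof. intros. apply is_derive_unique. apply phi_deriv; auto. Qed.

Lemma phi_deriv2 a lam : Cb lam -> a < 0 -> is_derive (Derive (fun b => phiV V b lam)) a (v a lam).
Proof.
  intros Hl Ha. apply (is_derive_ext_loc (fun b => g b lam)).
  apply loc_neg; auto. intros t Ht. symmetry. apply Dphi_eq; auto.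
  apply g_deriv; auto.
Qed.

Lemma g_cont a lam : Cb lam -> a < 0 -> continuity_pt (fun b => g b lam) a.
Proof.
  intros. apply continuity_pt_filterlim. apply (ex_derive_continuous (K:=R_AbsRing) (V:=R_NormedModule) (fun b => g b lam)). eexists. apply g_deriv; auto.
Qed.

Lemma phi_cont a lam : Cb lam -> a < 0 -> continuity_pt (fun b => phiV V b lam) a.
Proof.
  intros. apply continuity_pt_filterlim. apply (ex_derive_continuous (K:=R_AbsRing) (V:=R_NormedModule) (fun b => phiV V b lam)). eexists. apply phi_deriv; auto.
Qed.

End G.

Lemma ln_le' x y : 0 < x -> x <= y -> ln x <= ln y.
Proof. intros. destruct (Req_dec x y). subst; lra. left; apply ln_increasing; lra. Qed.

Lemma d_lin c x : is_derive (fun b => b * c) x c.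
Proof.
  eapply d_ext. apply d_mult. apply (is_derive_id (K:=R_AbsRing)). apply (is_derive_const (K:=R_AbsRing)).
  match goal with |- ?A = ?B => change (@eq R A B) end. unfold one, zero; simpl. ring.
Qed.

Section Root.
Variable V : R -> R.
Hypothesis hV : Orlicz V.
Variable Rad : R.
Hypothesis hR : 0 < Rad.

Lemma M0_lower lam B a n e : Cb lam -> bnd lam B -> a < 0 -> 0 <= n ->
  (forall x, Rabs x <= n -> e <= a * V x) -> 2 * n * exp (e - B) <= M V 0 a lam.
Proof.
  intros Hl HB Ha Hn He.
  eapply Rle_trans; [|apply (IG_RInt _ (-n) n)]; try apply Dom_F; auto; try apply F_nn; try lra.
  replace (2 * n * exp (e - B)) with (exp (e - B) * (n - - n)) by ring.
  apply RInt_lb_const. lra. apply Dom_F; auto.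
  intros x Hx. unfold Fk. simpl. rewrite Rmult_1_l. apply exp_mono.
  assert (Rabs x <= n) by (apply Rabs_le; lra). specialize (He x H). specialize (HB x).
  apply Rabs_le_between in HB. lra. auto.
Qed.

Lemma exists_low lam : Cb lam -> exists a, a < 0 /\ g V a lam < Rad.
Proof.
  intros Hl. destruct Hl as [Hc [B HB]]. assert (Hl : Cb lam) by (split; [auto| exists B; auto]).
  assert (HB0 : 0 <= B) by (specialize (HB 0); pose proof (Rabs_pos (lam 0)); lra).
  set (c := V 1). assert (Hc0 : 0 < c) by (apply (V_pos V hV); lra).
  set (d := Rmin 1 (Rad / (4 * c))).
  assert (Hd : 0 < d) by (apply Rmin_pos; [lra| apply Rdiv_lt_0_compat; lra]).
  assert (Hd1 : d <= 1) by apply Rmin_l.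
  assert (Hdc : c * d <= Rad / 4).
  { pose proof (Rmin_r 1 (Rad / (4 * c))). fold d in H.
    apply Rmult_le_compat_l with (r := c) in H; [|lra]. replace (c * (Rad / (4 * c))) with (Rad / 4) in H by (field; lra). lra. }
  set (Q := M V 0 (-1) lam). assert (HQ : 0 < Q) by (apply M0_pos; auto; lra).
  set (K := Q * exp B / d). assert (HK : 0 < K) by (unfold K; apply Rdiv_lt_0_compat; auto; apply Rmult_lt_0_compat; auto; apply exp_pos).
  set (a := - (2 + 4 * K / Rad)).
  assert (Ha : a <= -2) by (unfold a; assert (0 < 4 * K / Rad) by (apply Rdiv_lt_0_compat; lra); lra).
  set (t := - a / 2). set (eta := Rad / 2).
  assert (Ht : 1 <= t) by (unfold t; lra).
  exists a. split. lra.
  assert (H1 : M V 1 a lam <= eta * M V 0 a lam + / t * exp (- t * eta) * M V 0 (a + t) lam).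
  { unfold M. rewrite <- IG_scal, <- IG_scal, <- IG_plus; try apply Dom_scal; try apply Dom_F; auto; try (unfold t; lra).
    apply IG_le. apply Dom_F; auto; lra.
    apply Dom_plus; apply Dom_scal; apply Dom_F; auto; unfold t; lra.
    intros x. unfold Fk. simpl. rewrite Rmult_1_r, Rmult_1_l, Rmult_1_l.
    pose proof (exp_ineq1_le (t * (V x - eta))).
    assert (E : exp (t * (V x - eta)) * exp (a * V x + lam x) = exp (- t * eta) * exp ((a + t) * V x + lam x)).
    { rewrite <- !exp_plus. f_equal. ring. }
    pose proof (exp_pos (a * V x + lam x)). pose proof (exp_pos (t * (V x - eta))).
    assert (V x <= eta + / t * exp (t * (V x - eta))).
    { apply Rmult_le_reg_l with t. lra. rewrite Rmult_plus_distr_l, <- Rmult_assoc, Rinv_r by lra. nra. }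
    replace (eta * exp (a * V x + lam x) + / t * exp (- t * eta) * exp ((a + t) * V x + lam x))
      with ((eta + / t * exp (t * (V x - eta))) * exp (a * V x + lam x)) by (rewrite Rmult_plus_distr_r, Rmult_assoc, E; ring).
    apply Rmult_le_compat_r; lra. }
  assert (H2 : M V 0 (a + t) lam <= Q).
  { apply M_mono; auto; unfold t; lra. }
  assert (H3 : 2 * d * exp (- t * eta - B) <= M V 0 a lam).
  { apply (M0_lower lam B a d); auto; try lra. intros x Hx.
    assert (V x <= c * d). { pose proof (V_upper_small V hV x ltac:(lra)). fold c in H.
      assert (c * Rabs x <= c * d) by (apply Rmult_le_compat_l; lra). lra. }
    pose proof (V_nn V hV x). unfold t, eta. nra. }
  assert (H0 : 0 < M V 0 a lam) by (apply M0_pos; auto; lra).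
  unfold g, p.
  apply Rmult_lt_reg_r with (M V 0 a lam); auto. unfold Rdiv. rewrite Rmult_assoc, Rinv_l by lra. rewrite Rmult_1_r.
  assert (Hx : / t * exp (- t * eta) * M V 0 (a + t) lam <= / t * exp (- t * eta) * Q).
  { apply Rmult_le_compat_l; auto. apply Rmult_le_pos. left; apply Rinv_0_lt_compat; lra. left; apply exp_pos. }
  assert (Hy : / t * exp (- t * eta) * Q < Rad / 2 * M V 0 a lam).
  { apply Rlt_le_trans with (Rad / 2 * (2 * d * exp (- t * eta - B))).
    2:{ apply Rmult_le_compat_l; lra. }
    replace (exp (- t * eta - B)) with (exp (- t * eta) * / exp B) by (unfold Rminus; rewrite exp_plus, exp_Ropp; auto).
    pose proof (exp_pos (- t * eta)). pose proof (exp_pos B).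
    assert (Q * exp B < Rad * d * t).
    { assert (K < Rad * t / 2). { unfold t, a. field_simplify. 2: lra. unfold Rdiv. nra. }
      unfold K in H5. apply Rmult_lt_reg_r with (/ d). apply Rinv_0_lt_compat; lra.
      replace (Rad * d * t * / d) with (Rad * t) by (field; lra). unfold Rdiv in H5. nra. }
    apply Rmult_lt_reg_r with (t * exp B). nra.
    replace (/ t * exp (- t * eta) * Q * (t * exp B)) with (exp (- t * eta) * (Q * exp B)) by (field; lra).
    replace (Rad / 2 * (2 * d * (exp (- t * eta) * / exp B)) * (t * exp B)) with (exp (- t * eta) * (Rad * d * t)) by (field; lra).
    apply Rmult_lt_compat_l; auto. }
  unfold eta in *. lra.
Qed.


Lemma exists_high lam : Cb lam -> exists a, a < 0 /\ Rad < g V a lam.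
Proof.
  intros Hl. destruct Hl as [Hc [B HB]]. assert (Hl : Cb lam) by (split; [auto| exists B; auto]).
  assert (HB0 : 0 <= B) by (specialize (HB 0); pose proof (Rabs_pos (lam 0)); lra).
  set (c := V 1). assert (Hc0 : 0 < c) by (apply (V_pos V hV); lra).
  set (Q := M V 0 (-1) lam). assert (HQ : 0 < Q) by (apply M0_pos; auto; lra).
  set (n := 2 + / c + exp (Rad + 1 + B + ln Q)).
  assert (Hic : 0 < / c) by (apply Rinv_0_lt_compat; lra).
  pose proof (exp_pos (Rad + 1 + B + ln Q)) as HE.
  assert (Hn : 2 <= n) by (unfold n; lra).
  assert (HVn : 1 < V n).
  { pose proof (V_lower V hV n). fold c in H. rewrite Rabs_right in H by lra.
    assert (c * (n - 1) > 1). { unfold n. replace (c * (2 + / c + exp (Rad + 1 + B + ln Q) - 1)) with (c * (1 + exp (Rad + 1 + B + ln Q)) + 1) by (field; lra). nra. }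
    lra. }
  set (a := - / V n).
  assert (Ha : -1 < a < 0).
  { unfold a. assert (/ V n < 1) by (rewrite <- Rinv_1; apply Rinv_lt_contravar; lra).
    assert (0 < / V n) by (apply Rinv_0_lt_compat; lra). lra. }
  exists a. split. lra.
  assert (H1 : 2 * n * exp (-1 - B) <= M V 0 a lam).
  { apply (M0_lower lam B a n); auto; try lra. intros x Hx.
    pose proof (V_upper_int V hV n x Hx).
    assert (E : a * V n = -1) by (unfold a; field; lra).
    assert (a * V n <= a * V x) by (apply Rmult_le_compat_neg_l; lra). lra. }
  destruct (MVT_cor2 (fun b => phiV V b lam) (fun b => g V b lam) (-1) a) as [xi [Exi Hxi]]. lra.
  { intros b Hb. apply is_derive_Reals. apply phi_deriv; auto. lra. }
  rewrite !phiV_M in Exi. fold Q in Exi.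
  assert (H2 : g V xi lam < g V a lam) by (apply g_strict; auto; lra).
  assert (H3 : 0 < g V xi lam) by (apply g_pos; auto; lra).
  assert (H4 : g V xi lam * (a - -1) <= g V xi lam) by nra.
  assert (H5 : ln (2 * n * exp (-1 - B)) <= ln (M V 0 a lam)).
  { apply ln_le'; auto. apply Rmult_lt_0_compat. lra. apply exp_pos. }
  rewrite ln_mult, ln_mult, ln_exp in H5; try lra; try apply exp_pos.
  assert (H6 : Rad + 1 + B + ln Q < ln n).
  { rewrite <- (ln_exp (Rad + 1 + B + ln Q)). apply ln_increasing. auto. unfold n. lra. }
  assert (H7 : 0 < ln 2) by (pose proof ln_lt_2; lra).
  lra.
Qed.

Lemma root lam : Cb lam -> exists a, a < 0 /\ g V a lam = Rad.
Proof.
  intros Hl.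
  destruct (exists_low lam Hl) as [a1 [Ha1 H1]].
  destruct (exists_high lam Hl) as [a2 [Ha2 H2]].
  assert (a1 < a2).
  { destruct (Rlt_le_dec a1 a2); auto. pose proof (g_mono V hV a2 a1 lam Hl r Ha1). lra. }
  destruct (Ranalysis5.IVT_interv (fun b => g V b lam - Rad) a1 a2) as [z [Hz Ez]]; auto.
  { intros b Hb. apply continuity_pt_minus. apply g_cont; auto. lra. apply continuity_pt_const. intros x y; auto. }
  lra. lra.
  exists z. split. lra. lra.
Qed.

Lemma glb_lemma lam a0 : Cb lam -> a0 < 0 -> g V a0 lam = Rad ->
  is_glb_Rbar (fun y => exists a, a < 0 /\ y = phiV V a lam - a * Rad) (phiV V a0 lam - a0 * Rad).
Proof.
  intros Hl Ha0 Hg. split.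
  - intros y [a [Ha ->]]. simpl.
    destruct (Rtotal_order a a0) as [Hlt|[Heq|Hgt]].
    + destruct (MVT_cor2 (fun b => phiV V b lam - b * Rad) (fun b => g V b lam - Rad) a a0 Hlt) as [c [Ec Hc]].
      { intros b Hb. apply is_derive_Reals. eapply d_ext. apply d_minus. apply phi_deriv; auto. lra.
        apply d_lin. auto. }
      pose proof (g_mono V hV c a0 lam Hl ltac:(lra) Ha0). nra.
    + subst; lra.
    + destruct (MVT_cor2 (fun b => phiV V b lam - b * Rad) (fun b => g V b lam - Rad) a0 a Hgt) as [c [Ec Hc]].
      { intros b Hb. apply is_derive_Reals. eapply d_ext. apply d_minus. apply phi_deriv; auto. lra.
        apply d_lin. auto. }
      pose proof (g_mono V hV a0 c lam Hl ltac:(lra) ltac:(lra)). nra.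
  - intros b Hb. apply Hb. exists a0. split; auto.
Qed.

End Root.

Lemma supnorm_prop h : Cb h -> 0 <= supnorm h /\ forall x, Rabs (h x) <= supnorm h.
Proof.
  intros [_ [B HB]]. unfold supnorm.
  destruct (Lub_Rbar_correct (fun y => exists x, y = Rabs (h x))) as [H1 H2].
  destruct (Lub_Rbar (fun y => exists x, y = Rabs (h x))) as [l| |] eqn:El.
  - simpl. split.
    + pose proof (H1 (Rabs (h 0)) (ex_intro _ 0 eq_refl)). simpl in H. pose proof (Rabs_pos (h 0)). lra.
    + intros x. pose proof (H1 (Rabs (h x)) (ex_intro _ x eq_refl)). simpl in H. auto.
  - exfalso. specialize (H2 (Finite B)). simpl in H2. apply H2. intros y [x ->]. simpl. auto.
  - exfalso. specialize (H1 (Rabs (h 0)) (ex_intro _ 0 eq_refl)). simpl in H1. auto.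
Qed.

Lemma Cb_plus f h : Cb f -> Cb h -> Cb (fun x => f x + h x).
Proof.
  intros [Hf [B1 H1]] [Hh [B2 H2]]. split. intros x; apply cont_plus; auto.
  exists (B1 + B2). intros x. eapply Rle_trans. apply Rabs_triang. specialize (H1 x); specialize (H2 x). lra.
Qed.

Lemma exp_small s : 0 <= s <= 1 -> exp (2 * s) - 1 <= 2 * exp 2 * s /\ exp s <= 3 /\ / 3 <= exp (- s).
Proof.
  intros Hs. pose proof exp_le_3.
  split.
  - pose proof (exp_rem (- (2 * s))) as [_ _].
    pose proof (exp_ineq1_le (- (2*s))).
    assert (E : exp (2*s) * exp (- (2*s)) = 1) by (rewrite <- exp_plus; replace (2 * s + - (2 * s)) with 0 by ring; apply exp_0).
    pose proof (exp_pos (2*s)). assert (exp (2 * s) <= exp 2) by (apply exp_mono; lra).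
    assert (exp (2*s) * (1 - 2 * s) <= 1) by nra. nra.
  - split. apply Rle_trans with (exp 1); auto. apply exp_mono; lra.
    assert (E : exp s * exp (- s) = 1) by (rewrite <- exp_plus; replace (s + - s) with 0 by ring; apply exp_0).
    assert (exp s <= 3) by (apply Rle_trans with (exp 1); auto; apply exp_mono; lra).
    pose proof (exp_pos s). pose proof (exp_pos (-s)).
    apply Rmult_le_reg_l with 3. lra. rewrite Rinv_r by lra. nra.
Qed.

Section Fr.
Variable V : R -> R.
Hypothesis hV : Orlicz V.

Lemma M_pert k a lam h : Cb lam -> Cb h -> a < 0 ->
  exp (- supnorm h) * M V k a lam <= M V k a (fun x => lam x + h x) <= exp (supnorm h) * M V k a lam.
Proof.
  intros Hl Hh Ha. destruct (supnorm_prop h Hh) as [Hs0 Hs].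
  assert (Hl' : Cb (fun x => lam x + h x)) by (apply Cb_plus; auto).
  assert (E : forall x, Fk V k a (fun x => lam x + h x) x = exp (h x) * Fk V k a lam x).
  { intros x. unfold Fk. replace (a * V x + (lam x + h x)) with (h x + (a * V x + lam x)) by ring. rewrite exp_plus. ring. }
  unfold M. split.
  - rewrite <- IG_scal by (apply Dom_F; auto). apply IG_le. apply Dom_scal, Dom_F; auto. apply Dom_F; auto.
    intros x. rewrite E. apply Rmult_le_compat_r. apply F_nn; auto. apply exp_mono.
    specialize (Hs x). apply Rabs_le_between in Hs. lra.
  - rewrite <- IG_scal by (apply Dom_F; auto). apply IG_le. apply Dom_F; auto. apply Dom_scal, Dom_F; auto.
    intros x. rewrite E. apply Rmult_le_compat_r. apply F_nn; auto. apply exp_mono.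
    specialize (Hs x). apply Rabs_le_between in Hs. lra.
Qed.

Definition kap := 2 * exp 2.

Lemma p_pert k a lam h : Cb lam -> Cb h -> a < 0 -> supnorm h <= 1 ->
  Rabs (p V k a (fun x => lam x + h x) - p V k a lam) <= kap * supnorm h * p V k a lam.
Proof.
  intros Hl Hh Ha Hs1. destruct (supnorm_prop h Hh) as [Hs0 _]. set (s := supnorm h) in *.
  assert (Hl' : Cb (fun x => lam x + h x)) by (apply Cb_plus; auto).
  destruct (M_pert k a lam h Hl Hh Ha) as [Ak Bk]. destruct (M_pert 0 a lam h Hl Hh Ha) as [A0 B0]. fold s in Ak, Bk, A0, B0.
  pose proof (M0_pos V hV a lam Hl Ha). pose proof (M0_pos V hV a _ Hl' Ha).
  pose proof (M_nn V hV k a lam Hl Ha).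
  destruct (exp_small s (conj Hs0 Hs1)) as [X1 _].
  assert (Es : exp s * exp (- s) = 1) by (rewrite <- exp_plus; replace (s + - s) with 0 by ring; apply exp_0).
  assert (E2 : exp (2 * s) = exp s * exp s) by (rewrite <- exp_plus; f_equal; ring).
  pose proof (exp_pos s). pose proof (exp_pos (-s)).
  unfold p. set (Mk := M V k a lam) in *. set (M0 := M V 0 a lam) in *.
  set (Mk' := M V k a (fun x => lam x + h x)) in *. set (M0' := M V 0 a (fun x => lam x + h x)) in *.
  set (q := Mk / M0).
  assert (Hq : Mk = q * M0) by (unfold q; field; lra).
  assert (Hq0 : 0 <= q) by (unfold q; apply Rdiv_le_0_compat; lra).
  assert (C1 : M0 <= exp s * M0').
  { apply Rmult_le_reg_l with (exp (-s)); auto.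
    replace (exp (- s) * (exp s * M0')) with M0' by (rewrite <- Rmult_assoc, (Rmult_comm (exp (-s)) (exp s)), Es; ring). lra. }
  assert (U : Mk' / M0' <= exp (2 * s) * q).
  { apply Rmult_le_reg_r with M0'; auto. unfold Rdiv. rewrite Rmult_assoc, Rinv_l, Rmult_1_r by lra.
    rewrite E2. apply Rle_trans with (exp s * Mk); auto. rewrite Hq.
    replace (exp s * exp s * q * M0') with (exp s * q * (exp s * M0')) by ring.
    rewrite <- (Rmult_assoc (exp s) q M0). apply Rmult_le_compat_l; nra. }
  assert (Lo : exp (- (2 * s)) * q <= Mk' / M0').
  { apply Rmult_le_reg_r with M0'; auto. unfold Rdiv. rewrite (Rmult_assoc Mk'), Rinv_l, Rmult_1_r by lra.
    replace (- (2 * s)) with (- s + - s) by ring. rewrite exp_plus.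
    apply Rle_trans with (exp (-s) * Mk); auto. rewrite Hq.
    replace (exp (- s) * exp (- s) * q * M0') with (exp (- s) * q * (exp (- s) * M0')) by ring.
    rewrite <- (Rmult_assoc (exp (- s)) q M0). apply Rmult_le_compat_l. nra. apply Rle_trans with (exp (-s) * (exp s * M0)). apply Rmult_le_compat_l; lra.
    replace (exp (- s) * (exp s * M0)) with M0 by (rewrite <- Rmult_assoc, (Rmult_comm (exp (-s)) (exp s)), Es; ring). lra. }
  fold q.
  assert (E3 : exp (2 * s) * exp (- (2 * s)) = 1) by (rewrite <- exp_plus; replace (2 * s + - (2 * s)) with 0 by ring; apply exp_0).
  pose proof (exp_pos (- (2*s))). pose proof (exp_pos (2 * s)).
  assert (1 - exp (- (2 * s)) <= exp (2 * s) - 1).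
  { set (x := exp (2 * s)) in *. set (y := exp (- (2 * s))) in *.
    assert (x * (x + y - 2) = (x - 1)^2) by (replace (x * (x + y - 2)) with (x*x + x*y - 2*x) by ring; rewrite E3; ring).
    assert (0 <= x + y - 2). { apply Rmult_le_reg_l with x; auto. rewrite Rmult_0_r, H6. apply pow2_ge_0. } lra. }
  unfold kap. apply Rabs_le_between. split; nra.
Qed.

End Fr.

Lemma abs_prod_le x y X Y : Rabs x <= X -> Rabs y <= Y -> Rabs (x * y) <= X * Y.
Proof. intros. rewrite Rabs_mult. apply Rmult_le_compat; auto; apply Rabs_pos. Qed.

Lemma abs_sum6 a b c d e f : Rabs (a - b - c - d + e + f) <= Rabs a + Rabs b + Rabs c + Rabs d + Rabs e + Rabs f.
Proof.
  unfold Rminus.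
  pose proof (Rabs_triang (a + -b + -c + -d + e) f). pose proof (Rabs_triang (a + -b + -c + -d) e).
  pose proof (Rabs_triang (a + -b + -c) (-d)). pose proof (Rabs_triang (a + -b) (-c)). pose proof (Rabs_triang a (-b)).
  rewrite !Rabs_Ropp in *. lra.
Qed.

Lemma alg1 R s A0 A1 e0 e1 : 0 < R -> 0 <= s <= 1 -> Rabs A0 <= s -> Rabs A1 <= s * R ->
  0 <= e0 <= 3 * s^2 -> 0 <= e1 <= 3 * s^2 * R -> / 3 <= 1 + A0 + e0 ->
  Rabs ((R + A1 + e1) / (1 + A0 + e0) - R - (A1 - R * A0)) <= 42 * R * s^2.
Proof.
  intros HR Hs H0 H1 He0 He1 Hq.
  set (q0 := 1 + A0 + e0) in *.
  assert (E : (R + A1 + e1) / q0 - R - (A1 - R * A0) = (e1 - R * e0 - A1 * A0 - A1 * e0 + R * (A0 * A0) + R * (A0 * e0)) / q0).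
  { unfold q0 in *. field. lra. }
  rewrite E. unfold Rdiv. rewrite Rabs_mult, Rabs_inv, (Rabs_right q0) by lra.
  assert (Hn : Rabs (e1 - R * e0 - A1 * A0 - A1 * e0 + R * (A0 * A0) + R * (A0 * e0)) <= 14 * R * s^2).
  { assert (T1 : Rabs e1 <= 3 * s^2 * R) by (rewrite Rabs_right; lra).
    assert (T2 : Rabs (R * e0) <= R * (3 * s^2)) by (apply abs_prod_le; [rewrite Rabs_right; lra| rewrite Rabs_right; lra]).
    assert (T3 : Rabs (A1 * A0) <= s * R * s) by (apply abs_prod_le; auto).
    assert (T4 : Rabs (A1 * e0) <= s * R * (3 * s^2)) by (apply abs_prod_le; auto; rewrite Rabs_right; lra).
    assert (T5 : Rabs (R * (A0 * A0)) <= R * (s * s)) by (apply abs_prod_le; [rewrite Rabs_right; lra| apply abs_prod_le; auto]).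
    assert (T6 : Rabs (R * (A0 * e0)) <= R * (s * (3 * s^2))) by (apply abs_prod_le; [rewrite Rabs_right; lra| apply abs_prod_le; auto; rewrite Rabs_right; lra]).
    eapply Rle_trans. apply abs_sum6.
    assert (s^3 <= s^2) by (simpl; nra). assert (0 <= s^2) by nra. nra. }
  assert (0 < / q0) by (apply Rinv_0_lt_compat; lra).
  assert (/ q0 <= 3) by (rewrite <- (Rinv_inv 3); apply Rinv_le_contravar; lra).
  apply Rle_trans with (14 * R * s^2 * 3). apply Rmult_le_compat; auto using Rabs_pos; lra.
  assert (0 <= R * s^2) by nra. nra.
Qed.

Lemma ln_approx y : / 3 <= y -> Rabs (ln y - (y - 1)) <= 3 * (y - 1)^2.
Proof.
  intros Hy. pose proof (exp_ineq1_le (ln y)). rewrite exp_ln in H by lra.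
  pose proof (exp_ineq1_le (ln (/ y))). rewrite exp_ln in H0 by (apply Rinv_0_lt_compat; lra).
  rewrite ln_Rinv in H0 by lra.
  assert (E : / y - 1 + (y - 1) = (y - 1)^2 / y) by (field; lra).
  assert ((y - 1)^2 / y <= 3 * (y-1)^2).
  { unfold Rdiv. rewrite Rmult_comm. apply Rmult_le_compat_r. apply pow2_ge_0.
    rewrite <- (Rinv_inv 3). apply Rinv_le_contravar; lra. }
  apply Rabs_le_between. lra.
Qed.

Lemma alg2 s A0 e0 : 0 <= s <= 1 -> Rabs A0 <= s -> 0 <= e0 <= 3 * s^2 -> / 3 <= 1 + A0 + e0 ->
  Rabs (ln (1 + A0 + e0) - A0) <= 51 * s^2.
Proof.
  intros Hs H0 He Hq. pose proof (ln_approx _ Hq).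
  replace (1 + A0 + e0 - 1) with (A0 + e0) in H by ring.
  assert (Rabs (A0 + e0) <= 4 * s) by (eapply Rle_trans; [apply Rabs_triang|]; rewrite (Rabs_right e0) by lra; nra).
  assert ((A0 + e0)^2 <= 16 * s^2).
  { rewrite <- (pow2_abs (A0 + e0)). replace (16 * s^2) with ((4 * s)^2) by ring. apply pow_incr. split; auto using Rabs_pos. }
  replace (ln (1 + A0 + e0) - A0) with ((ln (1 + A0 + e0) - (A0 + e0)) + e0) by ring.
  eapply Rle_trans. apply Rabs_triang. rewrite (Rabs_right e0) by lra. lra.
Qed.

Section E.
Variable V : R -> R.
Hypothesis hV : Orlicz V.

Definition Gk k a (lam f : R -> R) := fun x => V x ^ k * f x * exp (a * V x + lam x).
Definition IE k a lam f : R := IG (Gk k a lam f) / M V 0 a lam.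

Lemma Dom_G k a lam f : Cb lam -> Cb f -> a < 0 -> Dom (Gk k a lam f).
Proof.
  intros [Hl [B HB]] [Hf [U HU]] Ha. apply (Dom_ig V hV k a lam f B U); auto.
Qed.

Lemma IE_plus k a lam f1 f2 : Cb lam -> Cb f1 -> Cb f2 -> a < 0 ->
  IE k a lam (fun x => f1 x + f2 x) = IE k a lam f1 + IE k a lam f2.
Proof.
  intros. unfold IE. rewrite <- Rdiv_plus_distr. f_equal.
  rewrite <- IG_plus by (apply Dom_G; auto). apply IG_ext. intros x; unfold Gk; ring.
Qed.

Lemma IE_scal k a lam c f : Cb lam -> Cb f -> a < 0 ->
  IE k a lam (fun x => c * f x) = c * IE k a lam f.
Proof.
  intros. unfold IE. unfold Rdiv. rewrite <- Rmult_assoc. f_equal.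
  rewrite <- IG_scal by (apply Dom_G; auto). apply IG_ext. intros x; unfold Gk; ring.
Qed.

Lemma Cb_const c : Cb (fun _ => c).
Proof. split. intros; apply cont_const. exists (Rabs c). intros; lra. Qed.

Lemma IE_bound k a lam f S : Cb lam -> Cb f -> a < 0 -> (forall x, Rabs (f x) <= S) ->
  Rabs (IE k a lam f) <= S * p V k a lam.
Proof.
  intros Hl Hf Ha HS. pose proof (M0_pos V hV a lam Hl Ha).
  assert (E : S * M V k a lam = IG (Gk k a lam (fun _ => S))).
  { unfold M. rewrite <- IG_scal by (apply Dom_F; auto). apply IG_ext; intros; unfold Gk, Fk; ring. }
  assert (L1 : IG (Gk k a lam f) <= S * M V k a lam).
  { rewrite E. apply IG_le; try apply Dom_G; auto using Cb_const. intros x. unfold Gk.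
    specialize (HS x). apply Rabs_le_between in HS. pose proof (F_nn V hV k a lam x). unfold Fk in H0.
    assert (0 <= V x ^ k) by (apply pow_le, (V_nn V hV)). pose proof (exp_pos (a * V x + lam x)).
    apply Rmult_le_compat_r. lra. apply Rmult_le_compat_l; lra. }
  assert (L2 : - (S * M V k a lam) <= IG (Gk k a lam f)).
  { rewrite E. replace (- IG (Gk k a lam (fun _ => S))) with (-1 * IG (Gk k a lam (fun _ => S))) by ring. rewrite <- IG_scal by (apply Dom_G; auto using Cb_const).
    apply IG_le; try apply Dom_G; auto using Cb_const. apply Dom_scal, Dom_G; auto using Cb_const.
    intros x. unfold Gk.
    specialize (HS x). apply Rabs_le_between in HS.
    assert (0 <= V x ^ k) by (apply pow_le, (V_nn V hV)). pose proof (exp_pos (a * V x + lam x)).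
    replace (-1 * (V x ^ k * S * exp (a * V x + lam x))) with (V x ^ k * (- S) * exp (a * V x + lam x)) by ring.
    apply Rmult_le_compat_r. lra. apply Rmult_le_compat_l; lra. }
  unfold IE, p. unfold Rdiv. rewrite Rabs_mult, Rabs_inv, (Rabs_right (M V 0 a lam)) by lra.
  rewrite <- Rmult_assoc. apply Rmult_le_compat_r. left; apply Rinv_0_lt_compat; lra.
  apply Rabs_le_between; lra.
Qed.

Lemma IE_nn k a lam f S : Cb lam -> Cb f -> a < 0 -> (forall x, 0 <= f x <= S) ->
  0 <= IE k a lam f <= S * p V k a lam.
Proof.
  intros Hl Hf Ha HS. pose proof (M0_pos V hV a lam Hl Ha).
  split.
  - unfold IE. apply Rdiv_le_0_compat; auto. apply IG_nn. apply Dom_G; auto.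
    intros x. unfold Gk. specialize (HS x). apply Rmult_le_pos. apply Rmult_le_pos. apply pow_le, (V_nn V hV). lra.
    left; apply exp_pos.
  - pose proof (IE_bound k a lam f S Hl Hf Ha). eapply Rle_trans; [apply Rle_abs|]. apply H0.
    intros x. specialize (HS x). rewrite Rabs_right; lra.
Qed.

Definition rho (h : R -> R) := fun x => exp (h x) - 1 - h x.

Lemma Cb_rho h : Cb h -> Cb (rho h).
Proof.
  intros [Hc [B HB]]. split. intros x; unfold rho; cont.
  exists (exp B + 1 + B). intros x. unfold rho. pose proof (exp_rem (h x)) as [R1 R2].
  rewrite Rabs_right by lra. specialize (HB x). apply Rabs_le_between in HB.
  assert (exp (h x) <= exp B) by (apply exp_mono; lra). lra.
Qed.

Lemma M_split k a lam h : Cb lam -> Cb h -> a < 0 ->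
  M V k a (fun x => lam x + h x) / M V 0 a lam = p V k a lam + IE k a lam h + IE k a lam (rho h).
Proof.
  intros Hl Hh Ha. pose proof (M0_pos V hV a lam Hl Ha).
  unfold p, IE. rewrite <- !Rdiv_plus_distr. f_equal.
  unfold M. rewrite <- !IG_plus; try apply Dom_plus; try apply Dom_G; try apply Dom_F; auto using Cb_rho.
  apply IG_ext. intros x. unfold Fk, Gk, rho.
  replace (a * V x + (lam x + h x)) with (h x + (a * V x + lam x)) by ring. rewrite exp_plus. ring.
Qed.

Lemma IE_rho_bound k a lam h : Cb lam -> Cb h -> a < 0 -> supnorm h <= 1 ->
  0 <= IE k a lam (rho h) <= 3 * supnorm h ^ 2 * p V k a lam.
Proof.
  intros Hl Hh Ha Hs1. destruct (supnorm_prop h Hh) as [Hs0 Hs].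
  apply IE_nn; auto using Cb_rho. intros x. unfold rho. pose proof (exp_rem (h x)) as [R1 R2].
  split; auto. eapply Rle_trans; [apply R2|].
  destruct (exp_small (supnorm h) (conj Hs0 Hs1)) as [_ [X2 _]].
  specialize (Hs x). assert (exp (Rabs (h x)) <= 3) by (eapply Rle_trans; [apply exp_mono, Hs| auto]).
  assert (h x ^ 2 <= supnorm h ^ 2).
  { rewrite <- (pow2_abs (h x)). apply pow_incr. split; auto using Rabs_pos. }
  pose proof (exp_pos (Rabs (h x))). assert (0 <= h x ^ 2) by apply pow2_ge_0. nra.
Qed.

End E.

Section VV.
Variable V : R -> R.
Hypothesis hV : Orlicz V.

Definition vd a lam := p V 3 a lam - 3 * p V 1 a lam * p V 2 a lam + 2 * p V 1 a lam ^ 3.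

Lemma v_deriv a lam : Cb lam -> a < 0 -> is_derive (fun b => v V b lam) a (vd a lam).
Proof.
  intros Hl Ha. unfold v. eapply d_ext. apply d_minus. apply (p_deriv V hV 2); auto.
  apply is_derive_pow. apply (p_deriv V hV 1); auto.
  unfold vd. simpl. ring.
Qed.

Lemma p0_one a lam : Cb lam -> a < 0 -> p V 0 a lam = 1.
Proof. intros. unfold p. field. pose proof (M0_pos V hV a lam H H0). lra. Qed.

Lemma p_bound k a lo hi lam : Cb lam -> lo <= a <= hi -> hi < 0 -> p V k a lam <= M V k hi lam / M V 0 lo lam.
Proof.
  intros Hl Ha Hhi. unfold p.
  assert (lo < 0) by lra.
  pose proof (M0_pos V hV lo lam Hl H). pose proof (M0_pos V hV a lam Hl ltac:(lra)).
  pose proof (M_mono V hV k a hi lam Hl ltac:(lra) Hhi ltac:(lra)).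
  pose proof (M_mono V hV 0 lo a lam Hl H ltac:(lra) ltac:(lra)).
  pose proof (M_nn V hV k a lam Hl ltac:(lra)).
  unfold Rdiv. apply Rmult_le_compat; auto. left; apply Rinv_0_lt_compat; lra.
  apply Rinv_le_contravar; lra.
Qed.

Lemma vd_bound a lo hi lam P1 P2 P3 : Cb lam -> lo <= a <= hi -> hi < 0 ->
  p V 1 a lam <= P1 -> p V 2 a lam <= P2 -> p V 3 a lam <= P3 ->
  Rabs (vd a lam) <= P3 + 3 * P1 * P2 + 2 * P1 ^ 3.
Proof.
  intros Hl Ha Hhi H1 H2 H3. unfold vd.
  pose proof (p_nn V hV 1 a lam Hl ltac:(lra)). pose proof (p_nn V hV 2 a lam Hl ltac:(lra)). pose proof (p_nn V hV 3 a lam Hl ltac:(lra)).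
  set (x1 := p V 1 a lam) in *. set (x2 := p V 2 a lam) in *. set (x3 := p V 3 a lam) in *.
  assert (x1 * x2 <= P1 * P2) by (apply Rmult_le_compat; lra).
  assert (x1 ^ 3 <= P1 ^ 3) by (apply pow_incr; lra).
  assert (0 <= x1 ^ 3) by (apply pow_le; lra). assert (0 <= x1 * x2) by nra.
  apply Rabs_le_between. split; lra.
Qed.

Lemma mvt_neg (f df : R -> R) x y : x < 0 -> y < 0 -> (forall t, t < 0 -> is_derive f t (df t)) ->
  exists z, Rmin x y <= z <= Rmax x y /\ f y - f x = df z * (y - x).
Proof.
  intros Hx Hy Hd. destruct (MVT_gen f x y df) as [z [Hz E]].
  - intros t Ht. apply Hd. pose proof (Rmax_lub_lt x y 0 Hx Hy). lra.
  - intros t Ht. apply continuity_pt_filterlim. apply (ex_derive_continuous (K:=R_AbsRing) (V:=R_NormedModule) f).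
    eexists. apply Hd. pose proof (Rmax_lub_lt x y 0 Hx Hy). lra.
  - exists z. auto.
Qed.

Lemma v_pert a lam h : Cb lam -> Cb h -> a < 0 -> supnorm h <= 1 ->
  Rabs (v V a (fun x => lam x + h x) - v V a lam) <= kap * supnorm h * (p V 2 a lam + (2 + kap) * p V 1 a lam ^ 2).
Proof.
  intros Hl Hh Ha Hs1. destruct (supnorm_prop h Hh) as [Hs0 _].
  pose proof (p_pert V hV 1 a lam h Hl Hh Ha Hs1) as P1. pose proof (p_pert V hV 2 a lam h Hl Hh Ha Hs1) as P2.
  pose proof (p_nn V hV 1 a lam Hl Ha). pose proof (p_nn V hV 2 a lam Hl Ha).
  assert (Hl' : Cb (fun x => lam x + h x)) by (apply Cb_plus; auto).
  pose proof (p_nn V hV 1 a _ Hl' Ha).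
  set (s := supnorm h) in *. unfold v.
  set (x1 := p V 1 a lam) in *. set (x2 := p V 2 a lam) in *.
  set (y1 := p V 1 a (fun x => lam x + h x)) in *. set (y2 := p V 2 a (fun x => lam x + h x)) in *.
  assert (Hk : 0 < kap) by (unfold kap; pose proof (exp_pos 2); lra).
  assert (Hks : kap * s <= kap) by nra.
  assert (Hy1 : y1 + x1 <= (2 + kap) * x1).
  { apply Rabs_le_between in P1. assert (kap * s * x1 <= kap * x1) by (apply Rmult_le_compat_r; lra). lra. }
  replace (y2 - y1 ^ 2 - (x2 - x1 ^ 2)) with ((y2 - x2) - (y1 - x1) * (y1 + x1)) by ring.
  eapply Rle_trans. apply Rabs_triang. rewrite Rabs_Ropp, Rabs_mult, (Rabs_right (y1 + x1)) by lra.
  assert (Rabs (y1 - x1) * (y1 + x1) <= kap * s * x1 * ((2 + kap) * x1)).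
  { apply Rmult_le_compat; auto using Rabs_pos; lra. }
  nra.
Qed.

End VV.

Section Fre.
Variable V : R -> R.
Hypothesis hV : Orlicz V.
Variable Rad : R.
Hypothesis hR : 0 < Rad.

Lemma frechet (alpha : (R -> R) -> R) lam :
  (forall mu, Cb mu -> alpha mu < 0 /\ g V (alpha mu) mu = Rad) -> Cb lam ->
  Frechet_diff_Cb (fun mu => phiV V (alpha mu) mu) lam.
Proof.
  intros Hal Hl. destruct (Hal lam Hl) as [Ha Hga]. set (a := alpha lam) in *.
  set (lo := 3 * a / 2). set (hi := a / 2).
  assert (Hlo : lo < 0) by (unfold lo; lra). assert (Hhi : hi < 0) by (unfold hi; lra).
  pose proof (M0_pos V hV lo lam Hl Hlo) as HM0lo.
  set (P1 := M V 1 hi lam / M V 0 lo lam). set (P2 := M V 2 hi lam / M V 0 lo lam). set (P3 := M V 3 hi lam / M V 0 lo lam).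
  assert (HP1 : 0 <= P1) by (apply Rdiv_le_0_compat; auto; apply M_nn; auto).
  assert (HP2 : 0 <= P2) by (apply Rdiv_le_0_compat; auto; apply M_nn; auto).
  assert (HP3 : 0 <= P3) by (apply Rdiv_le_0_compat; auto; apply M_nn; auto).
  set (W := P3 + 3 * P1 * P2 + 2 * P1 ^ 3).
  assert (HW : 0 <= W) by (unfold W; assert (0 <= P1^3) by (apply pow_le; auto); nra).
  set (v0 := v V a lam). assert (Hv0 : 0 < v0) by (apply v_pos; auto).
  assert (Hk : 0 < kap) by (unfold kap; pose proof (exp_pos 2); lra).
  assert (pb : forall k z, lo <= z <= hi -> p V k z lam <= M V k hi lam / M V 0 lo lam).
  { intros k z Hz. apply p_bound; auto. }
  assert (vlip : forall z1 z2, lo <= z1 <= hi -> lo <= z2 <= hi -> Rabs (v V z1 lam - v V z2 lam) <= W * Rabs (z1 - z2)).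
  { intros z1 z2 H1 H2. destruct (mvt_neg (fun b => v V b lam) (fun b => vd V b lam) z2 z1) as [z [Hz E]]; try lra.
    { intros t Ht. apply v_deriv; auto. }
    rewrite E, Rabs_mult. apply Rmult_le_compat_r. apply Rabs_pos.
    assert (lo <= z <= hi).
    { split. apply Rle_trans with (Rmin z2 z1); [apply Rmin_glb; lra| lra].
      apply Rle_trans with (Rmax z2 z1); [lra| apply Rmax_lub; lra]. }
    apply (vd_bound V hV z lo hi lam); auto; apply pb; auto. }
  set (eta := Rmin (- a / 2) (v0 / (2 * (W + 1)))).
  assert (Heta : 0 < eta) by (apply Rmin_pos; [lra| apply Rdiv_lt_0_compat; lra]).
  assert (Heta1 : eta <= - a / 2) by apply Rmin_l.
  assert (Heta2 : W * eta <= v0 / 2).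
  { pose proof (Rmin_r (- a / 2) (v0 / (2 * (W + 1)))). fold eta in H.
    apply Rmult_le_compat_l with (r := 2 * (W + 1)) in H; [|lra].
    replace (2 * (W + 1) * (v0 / (2 * (W + 1)))) with v0 in H by (field; lra). nra. }
  assert (F1 : forall z, Rabs (z - a) <= eta -> v0 / 2 <= v V z lam).
  { intros z Hz. apply Rabs_le_between in Hz.
    assert (Hz' : lo <= z <= hi) by (unfold lo, hi; lra).
    assert (Ha' : lo <= a <= hi) by (unfold lo, hi; lra).
    pose proof (vlip z a Hz' Ha'). fold v0 in H.
    assert (W * Rabs (z - a) <= W * eta) by (apply Rmult_le_compat_l; auto; apply Rabs_le; lra).
    apply Rabs_le_between in H. lra. }
  assert (F2 : Rad + eta * (v0 / 2) <= g V (a + eta) lam).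
  { destruct (mvt_neg (fun b => g V b lam) (fun b => v V b lam) a (a + eta)) as [z [Hz E]]; try lra.
    { intros t Ht. apply g_deriv; auto. }
    rewrite Rmin_left in Hz by lra. rewrite Rmax_right in Hz by lra.
    assert (v0 / 2 <= v V z lam) by (apply F1; apply Rabs_le; lra).
    rewrite Hga in E. nra. }
  assert (F3 : g V (a - eta) lam <= Rad - eta * (v0 / 2)).
  { destruct (mvt_neg (fun b => g V b lam) (fun b => v V b lam) (a - eta) a) as [z [Hz E]]; try lra.
    { intros t Ht. apply g_deriv; auto. }
    rewrite Rmin_left in Hz by lra. rewrite Rmax_right in Hz by lra.
    assert (v0 / 2 <= v V z lam) by (apply F1; apply Rabs_le; lra).
    rewrite Hga in E. nra. }
  set (Cv := kap * (P2 + (2 + kap) * P1 ^ 2)).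
  assert (HCv : 0 <= Cv) by (unfold Cv; assert (0 <= P1^2) by (apply pow2_ge_0); assert (0 <= (2 + kap) * P1^2) by nra; nra).
  set (A := 4 * kap * P1 / v0).
  assert (HA : 0 <= A) by (unfold A; apply Rdiv_le_0_compat; nra).
  set (Cf := kap * P1 * A + Rad * ((W * A + Cv) * A + 42 * Rad) / v0 + 51).
  assert (HCf : 0 <= Cf).
  { unfold Cf. assert (0 <= kap * P1 * A) by (apply Rmult_le_pos; nra).
    assert (0 <= Rad * ((W * A + Cv) * A + 42 * Rad) / v0).
    { apply Rdiv_le_0_compat; auto. apply Rmult_le_pos. lra. assert (0 <= W * A) by nra. nra. } lra. }
  exists (fun f => IE V 0 a lam f - Rad / v0 * (IE V 1 a lam f - Rad * IE V 0 a lam f)).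
  split.
  { split; [|split].
    - intros f1 f2 Hf1 Hf2. rewrite !IE_plus; auto. ring.
    - intros c f Hf. rewrite !IE_scal; auto. ring.
    - exists (1 + 2 * Rad * Rad / v0). intros f Hf. destruct (supnorm_prop f Hf) as [Hs0 Hs].
      pose proof (IE_bound V hV 0 a lam f _ Hl Hf Ha Hs) as B0. pose proof (IE_bound V hV 1 a lam f _ Hl Hf Ha Hs) as B1.
      rewrite p0_one in B0 by auto. unfold g in Hga. rewrite Hga in B1.
      set (s := supnorm f) in *. set (x0 := IE V 0 a lam f) in *. set (x1 := IE V 1 a lam f) in *.
      assert (Rabs (x1 - Rad * x0) <= 2 * Rad * s).
      { eapply Rle_trans. apply Rabs_triang. rewrite Rabs_Ropp, Rabs_mult, (Rabs_right Rad) by lra. nra. }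
      eapply Rle_trans. apply Rabs_triang. rewrite Rabs_Ropp, Rabs_mult.
      rewrite (Rabs_right (Rad / v0)) by (apply Rle_ge, Rdiv_le_0_compat; lra).
      assert (Rad / v0 * Rabs (x1 - Rad * x0) <= Rad / v0 * (2 * Rad * s)) by (apply Rmult_le_compat_l; auto; apply Rdiv_le_0_compat; lra).
      replace ((1 + 2 * Rad * Rad / v0) * s) with (s + Rad / v0 * (2 * Rad * s)) by (field; lra). lra. }
  intros eps Heps.
  set (dl := Rmin (Rmin 1 (eta * v0 / (2 * kap * P1 + 1))) (Rmin (v0 / (4 * Cv + 1)) (eps / (Cf + 1)))).
  assert (Hd : 0 < dl).
  { apply Rmin_pos; apply Rmin_pos; try lra; apply Rdiv_lt_0_compat; nra. }
  exists dl. split; auto.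
  intros h Hh Hs. destruct (supnorm_prop h Hh) as [Hs0 Hsx]. set (s := supnorm h) in *.
  assert (Hs1 : s < 1) by (pose proof (Rmin_l (Rmin 1 (eta * v0 / (2 * kap * P1 + 1))) (Rmin (v0 / (4 * Cv + 1)) (eps / (Cf + 1)))); pose proof (Rmin_l 1 (eta * v0 / (2 * kap * P1 + 1))); unfold dl in Hs; lra).
  assert (Hs2 : kap * P1 * s < eta * (v0 / 2)).
  { pose proof (Rmin_l (Rmin 1 (eta * v0 / (2 * kap * P1 + 1))) (Rmin (v0 / (4 * Cv + 1)) (eps / (Cf + 1)))).
    pose proof (Rmin_r 1 (eta * v0 / (2 * kap * P1 + 1))). unfold dl in Hs.
    assert (s * (2 * kap * P1 + 1) < eta * v0).
    { apply Rlt_le_trans with (eta * v0 / (2 * kap * P1 + 1) * (2 * kap * P1 + 1)). apply Rmult_lt_compat_r; nra.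
      right; field; nra. } nra. }
  assert (Hs3 : Cv * s < v0 / 4).
  { pose proof (Rmin_r (Rmin 1 (eta * v0 / (2 * kap * P1 + 1))) (Rmin (v0 / (4 * Cv + 1)) (eps / (Cf + 1)))).
    pose proof (Rmin_l (v0 / (4 * Cv + 1)) (eps / (Cf + 1))). unfold dl in Hs.
    assert (s * (4 * Cv + 1) < v0).
    { apply Rlt_le_trans with (v0 / (4 * Cv + 1) * (4 * Cv + 1)). apply Rmult_lt_compat_r; nra.
      right; field; nra. } nra. }
  assert (Hs4 : Cf * s <= eps).
  { pose proof (Rmin_r (Rmin 1 (eta * v0 / (2 * kap * P1 + 1))) (Rmin (v0 / (4 * Cv + 1)) (eps / (Cf + 1)))).
    pose proof (Rmin_r (v0 / (4 * Cv + 1)) (eps / (Cf + 1))). unfold dl in Hs.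
    assert (s * (Cf + 1) < eps).
    { apply Rlt_le_trans with (eps / (Cf + 1) * (Cf + 1)). apply Rmult_lt_compat_r; nra.
      right; field; nra. } nra. }
  assert (Hs1' : s <= 1) by lra.
  set (lam' := fun x => lam x + h x).
  assert (Hl' : Cb lam') by (apply Cb_plus; auto).
  destruct (Hal lam' Hl') as [Ha' Hga']. set (a' := alpha lam') in *.
  assert (Gp : forall z, lo <= z <= hi -> Rabs (g V z lam' - g V z lam) <= kap * s * P1).
  { intros z Hz. unfold g. eapply Rle_trans. apply (p_pert V hV 1 z lam h); auto; lra.
    apply Rmult_le_compat_l. nra. apply pb; auto. }
  assert (Loc : Rabs (a' - a) < eta).
  { assert (Hae : lo <= a + eta <= hi) by (unfold lo, hi; lra).
    assert (Hae' : lo <= a - eta <= hi) by (unfold lo, hi; lra).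
    pose proof (Gp _ Hae) as G1. pose proof (Gp _ Hae') as G2.
    apply Rabs_le_between in G1. apply Rabs_le_between in G2.
    apply Rabs_lt_between. split.
    - destruct (Rle_lt_dec a' (a - eta)); [|lra]. exfalso.
      pose proof (g_mono V hV a' (a - eta) lam' Hl' r ltac:(lra)). lra.
    - destruct (Rle_lt_dec (a + eta) a'); [|lra]. exfalso.
      pose proof (g_mono V hV (a + eta) a' lam' Hl' r Ha'). lra. }
  assert (Vz : forall z, Rabs (z - a) <= eta -> v0 / 4 <= v V z lam').
  { intros z Hz. pose proof (F1 z Hz).
    assert (Hz' : lo <= z <= hi) by (apply Rabs_le_between in Hz; unfold lo, hi; lra).
    pose proof (v_pert V hV z lam h Hl Hh ltac:(lra) Hs1') as VP. fold s lam' in VP.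
    assert (kap * s * (p V 2 z lam + (2 + kap) * p V 1 z lam ^ 2) <= Cv * s).
    { unfold Cv. replace (kap * (P2 + (2 + kap) * P1 ^ 2) * s) with (kap * s * (P2 + (2 + kap) * P1 ^ 2)) by ring.
      apply Rmult_le_compat_l. nra. pose proof (pb 2%nat z Hz'). pose proof (pb 1%nat z Hz').
      pose proof (p_nn V hV 1 z lam Hl ltac:(lra)). fold P1 P2 in H0, H1.
      assert (p V 1 z lam ^ 2 <= P1 ^ 2) by (apply pow_incr; lra). nra. }
    apply Rabs_le_between in VP. lra. }
  destruct (mvt_neg (fun b => g V b lam') (fun b => v V b lam') a a') as [ze [Hze Eze]]; auto.
  { intros t Ht. apply g_deriv; auto. }
  cbv beta in Eze. rewrite Hga' in Eze.
  assert (Hzea : Rabs (ze - a) <= Rabs (a' - a)).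
  { apply Rabs_le. 
    destruct (Rle_dec a a'); [rewrite Rmin_left, Rmax_right in Hze by lra | rewrite Rmin_right, Rmax_left in Hze by lra];
    [rewrite (Rabs_right (a' - a)) by lra | rewrite (Rabs_left (a' - a)) by lra]; lra. }
  assert (Hzeta : Rabs (ze - a) <= eta) by lra.
  pose proof (Vz ze Hzeta) as Vze.
  assert (Ha_in : lo <= a <= hi) by (unfold lo, hi; lra).
  pose proof (Gp a Ha_in) as Gpa. rewrite Hga in Gpa.
  assert (Dl : Rabs (a' - a) <= A * s).
  { assert (Rabs (v V ze lam' * (a' - a)) <= kap * s * P1) by (rewrite <- Eze, <- Rabs_Ropp; replace (- (Rad - g V a lam')) with (g V a lam' - Rad) by ring; auto).
    rewrite Rabs_mult, (Rabs_right (v V ze lam')) in H by lra.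
    unfold A. apply Rmult_le_reg_l with (v0 / 4). lra.
    apply Rle_trans with (v V ze lam' * Rabs (a' - a)). apply Rmult_le_compat_r; auto using Rabs_pos.
    replace (v0 / 4 * (4 * kap * P1 / v0 * s)) with (kap * s * P1) by (field; lra). auto. }
  pose proof (M_split V hV 0 a lam h Hl Hh Ha) as S0. pose proof (M_split V hV 1 a lam h Hl Hh Ha) as S1.
  fold lam' in S0, S1. rewrite p0_one in S0 by auto.
  assert (Hp1 : p V 1 a lam = Rad) by (unfold g in Hga; auto). rewrite Hp1 in S1.
  set (A0 := IE V 0 a lam h) in *. set (A1 := IE V 1 a lam h) in *.
  set (e0 := IE V 0 a lam (rho h)) in *. set (e1 := IE V 1 a lam (rho h)) in *.
  assert (BA0 : Rabs A0 <= s) by (pose proof (IE_bound V hV 0 a lam h s Hl Hh Ha Hsx); rewrite p0_one in H by auto; fold A0 in H; lra).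
  assert (BA1 : Rabs A1 <= s * Rad) by (pose proof (IE_bound V hV 1 a lam h s Hl Hh Ha Hsx); rewrite Hp1 in H; fold A1 in H; lra).
  assert (Be0 : 0 <= e0 <= 3 * s ^ 2) by (pose proof (IE_rho_bound V hV 0 a lam h Hl Hh Ha Hs1'); rewrite p0_one in H by auto; fold s e0 in H; lra).
  assert (Be1 : 0 <= e1 <= 3 * s ^ 2 * Rad) by (pose proof (IE_rho_bound V hV 1 a lam h Hl Hh Ha Hs1'); rewrite Hp1 in H; fold s e1 in H; lra).
  pose proof (M0_pos V hV a lam Hl Ha) as HM0. pose proof (M0_pos V hV a lam' Hl' Ha) as HM0'.
  assert (Hq0 : / 3 <= 1 + A0 + e0).
  { rewrite <- S0. destruct (M_pert V hV 0 a lam h Hl Hh Ha) as [Lo _]. fold s lam' in Lo.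
    destruct (exp_small s (conj Hs0 Hs1')) as [_ [_ X3]].
    apply Rmult_le_reg_r with (M V 0 a lam); auto. unfold Rdiv. rewrite Rmult_assoc, Rinv_l, Rmult_1_r by lra. nra. }
  assert (Eg : g V a lam' = (Rad + A1 + e1) / (1 + A0 + e0)).
  { rewrite <- S0, <- S1. unfold g, p. field. lra. }
  pose proof (alg1 Rad s A0 A1 e0 e1 hR (conj Hs0 Hs1') BA0 BA1 Be0 Be1 Hq0) as AL1. rewrite <- Eg in AL1.
  pose proof (alg2 s A0 e0 (conj Hs0 Hs1') BA0 Be0 Hq0) as AL2.
  assert (Ephi0 : phiV V a lam' = phiV V a lam + ln (1 + A0 + e0)).
  { rewrite !phiV_M. rewrite <- S0. rewrite <- ln_mult by (try lra; apply Rdiv_lt_0_compat; lra). f_equal. field. lra. }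
  destruct (mvt_neg (fun b => phiV V b lam') (fun b => g V b lam') a a') as [xi [Hxi Exi]]; auto.
  { intros t Ht. apply phi_deriv; auto. }
  cbv beta in Exi.
  assert (Xb : Rabs (g V xi lam' - Rad) <= kap * s * P1).
  { destruct (Rle_dec a a').
    - rewrite Rmin_left, Rmax_right in Hxi by lra.
      pose proof (g_mono V hV a xi lam' Hl' ltac:(lra) ltac:(lra)). pose proof (g_mono V hV xi a' lam' Hl' ltac:(lra) Ha').
      apply Rabs_le_between in Gpa. apply Rabs_le_between. lra.
    - rewrite Rmin_right, Rmax_left in Hxi by lra.
      pose proof (g_mono V hV xi a lam' Hl' ltac:(lra) Ha). pose proof (g_mono V hV a' xi lam' Hl' ltac:(lra) ltac:(lra)).
      apply Rabs_le_between in Gpa. apply Rabs_le_between. lra. }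
  set (Cov := A1 - Rad * A0).
  assert (Yb : Rabs (v0 * (a' - a) + Cov) <= ((W * A + Cv) * A + 42 * Rad) * s ^ 2).
  { assert (EY : v0 * (a' - a) + Cov = (v0 - v V ze lam') * (a' - a) - (g V a lam' - Rad - Cov)).
    { replace ((v0 - v V ze lam') * (a' - a)) with (v0 * (a' - a) - v V ze lam' * (a' - a)) by ring.
      rewrite <- Eze. ring. }
    rewrite EY. eapply Rle_trans. apply Rabs_triang. rewrite Rabs_Ropp.
    assert (Hze_in : lo <= ze <= hi) by (apply Rabs_le_between in Hzeta; unfold lo, hi; lra).
    assert (B1 : Rabs (v0 - v V ze lam') <= (W * A + Cv) * s).
    { replace (v0 - v V ze lam') with ((v V a lam - v V ze lam) + (v V ze lam - v V ze lam')) by (unfold v0; ring).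
      eapply Rle_trans. apply Rabs_triang.
      pose proof (vlip a ze Ha_in Hze_in).
      pose proof (v_pert V hV ze lam h Hl Hh ltac:(lra) Hs1') as VP. fold s lam' in VP.
      rewrite Rabs_minus_sym in VP.
      assert (kap * s * (p V 2 ze lam + (2 + kap) * p V 1 ze lam ^ 2) <= Cv * s).
      { unfold Cv. replace (kap * (P2 + (2 + kap) * P1 ^ 2) * s) with (kap * s * (P2 + (2 + kap) * P1 ^ 2)) by ring.
        apply Rmult_le_compat_l. nra. pose proof (pb 2%nat ze Hze_in) as Q2. pose proof (pb 1%nat ze Hze_in) as Q1.
        pose proof (p_nn V hV 1 ze lam Hl ltac:(lra)) as Q3. fold P1 P2 in Q1, Q2.
        assert (p V 1 ze lam ^ 2 <= P1 ^ 2) by (apply pow_incr; lra). nra. }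
      rewrite Rabs_minus_sym in Hzea.
      assert (W * Rabs (a - ze) <= W * (A * s)) by (apply Rmult_le_compat_l; auto; lra).
      lra. }
    assert (Rabs ((v0 - v V ze lam') * (a' - a)) <= (W * A + Cv) * s * (A * s)) by (apply abs_prod_le; auto).
    replace (((W * A + Cv) * A + 42 * Rad) * s ^ 2) with ((W * A + Cv) * s * (A * s) + 42 * Rad * s ^ 2) by ring.
    unfold Cov. lra. }
  cbv beta. fold lam'. fold a'. fold a.
  assert (EF : phiV V a' lam' - phiV V a lam - (A0 - Rad / v0 * Cov)
             = (g V xi lam' - Rad) * (a' - a) + Rad / v0 * (v0 * (a' - a) + Cov) + (ln (1 + A0 + e0) - A0)).
  { assert (phiV V a' lam' = phiV V a lam' + g V xi lam' * (a' - a)) by lra.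
    rewrite H, Ephi0. unfold Cov. field. lra. }
  rewrite EF.
  assert (T1 : Rabs ((g V xi lam' - Rad) * (a' - a)) <= kap * s * P1 * (A * s)) by (apply abs_prod_le; auto).
  assert (T2 : Rabs (Rad / v0 * (v0 * (a' - a) + Cov)) <= Rad / v0 * (((W * A + Cv) * A + 42 * Rad) * s ^ 2)).
  { rewrite Rabs_mult, (Rabs_right (Rad / v0)) by (apply Rle_ge, Rdiv_le_0_compat; lra).
    apply Rmult_le_compat_l; auto. apply Rdiv_le_0_compat; lra. }
  assert (Tot : Rabs ((g V xi lam' - Rad) * (a' - a) + Rad / v0 * (v0 * (a' - a) + Cov) + (ln (1 + A0 + e0) - A0)) <= Cf * s * s).
  { eapply Rle_trans. apply Rabs_triang. eapply Rle_trans. apply Rplus_le_compat_r. apply Rabs_triang.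
    replace (Cf * s * s) with (kap * s * P1 * (A * s) + Rad / v0 * (((W * A + Cv) * A + 42 * Rad) * s ^ 2) + 51 * s ^ 2)
      by (unfold Cf; field; lra).
    lra. }
  eapply Rle_trans. apply Tot. apply Rmult_le_compat_r; auto.
Qed.

End Fre.

Theorem mainTheorem3 (V : R -> R) (Rad : R) (hV : Orlicz V) (hR : 0 < Rad) :
  let cond (lam : R -> R) (a : R) :=
    is_derive (fun b => phiV V b lam) a Rad /\
    (exists d2, 0 < d2 /\ is_derive (Derive (fun b => phiV V b lam)) a d2) in
  exists alpha : (R -> R) -> R,
    (forall lam, Cb lam ->
       alpha lam < 0 /\ cond lam (alpha lam) /\
       (forall a, a < 0 -> cond lam a -> a = alpha lam)) /\
    (forall lam, Cb lam -> Frechet_diff_Cb (fun mu => phiV V (alpha mu) mu) lam) /\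
    (forall lam, Cb lam ->
       is_glb_Rbar (fun y => exists a, a < 0 /\ y = phiV V a lam - a * Rad)
                   (phiV V (alpha lam) lam - alpha lam * Rad)).
Proof.
  intros cond.
  set (alpha := fun lam => epsilon (inhabits 0) (fun a => Cb lam -> a < 0 /\ g V a lam = Rad)).
  assert (Hal : forall mu, Cb mu -> alpha mu < 0 /\ g V (alpha mu) mu = Rad).
  { intros mu Hmu. unfold alpha. refine (epsilon_spec (inhabits 0) (fun a => Cb mu -> a < 0 /\ g V a mu = Rad) _ Hmu).
    destruct (root V hV Rad hR mu Hmu) as [a Ha]. exists a. intros _. exact Ha. }
  exists alpha. split; [|split].
  - intros lam Hl. destruct (Hal lam Hl) as [Ha Hg]. split. exact Ha. split.
    + split. rewrite <- Hg. apply (phi_deriv V hV (alpha lam) lam Hl Ha).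
      exists (v V (alpha lam) lam). split. apply (v_pos V hV _ _ Hl Ha). apply (phi_deriv2 V hV _ _ Hl Ha).
    + intros b Hb [Hd _].
      assert (Hgb : g V b lam = Rad).
      { pose proof (is_derive_unique _ _ _ Hd). pose proof (is_derive_unique _ _ _ (phi_deriv V hV b lam Hl Hb)). rewrite H in H0. symmetry. exact H0. }
      destruct (Rtotal_order b (alpha lam)) as [H|[H|H]]; auto.
      * pose proof (g_strict V hV b (alpha lam) lam Hl H Ha). lra.
      * pose proof (g_strict V hV (alpha lam) b lam Hl H Hb). lra.
  - intros lam Hl. apply (frechet V hV Rad hR alpha lam Hal Hl).
  - intros lam Hl. destruct (Hal lam Hl) as [Ha Hg]. apply (glb_lemma V hV Rad hR lam (alpha lam) Hl Ha Hg).
Qed.
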